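(* For every integer $m\ge2$ there exists a weight $\mathbf a$ such that $\mathbb T^{m,\mathbf a}$ bi-Lipschitz embeds into $\mathbb R^2$ with the embedded image being a quasiconvex subset of $\mathbb R^2$.
   Context: Let $A=\{1,\dots,m\}$. $A^k$: words of length $k$ ($A^0=\{\varepsilon\}$), $A^*=\bigcup_kA^k$, $A^{\mathbb N}$: infinite words; $A^n_u$, $A^{\mathbb N}_u$: words beginning with $u$; $w(n)$: length-$n$ prefix; $i^{(k)}$: $k$ copies of $i$. Graphs $G_k=(A^k,E_k)$: $E_1=\{\{1,i\}:i\ne1\}$, $E_{k+1}=\{\{12^{(k)},i1^{(k)}\}:i\in A\setminus\{1\}\}\cup\{\{iw,iu\}:i\in A,\{w,u\}\in E_k\}$. $A^{\mathbb N}_{u_1}\wedge A^{\mathbb N}_{u_2}$: the $w\in A^{\mathbb N}_{u_1}$ such that for every $n>\max\{|u_1|,|u_2|\}$ some $u\in A^n_{u_2}$ has $\{w(n),u\}\in E_n$, together with the symmetric set. Chain joining $w,w'$: list $A^{\mathbb N}_{v_1},\dots,A^{\mathbb N}_{v_N}$, $w\in A^{\mathbb N}_{v_1}$, $w'\in A^{\mathbb N}_{v_N}$, consecutive $\wedge$ nonempty. Weight: non-increasing $\mathbf a:\mathbb N\to(0,1/2]$ with $\mathbf a(1)=\mathbf a(2)=1/2$, $\mathbf a(i)\to0$; $\Delta_{\mathbf a}(i_1\cdots i_k)=\prod\mathbf a(i_j)$, $\Delta_{\mathbf a}(\varepsilon)=1$. $\rho(w,u)=\inf\sum_{i=1}^N\Delta_{\mathbf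 a}(v_i)$ over chains; $\mathbb T^{m,\mathbf a}=A^{\mathbb N}/\{\rho=0\}$ with the induced metric. A set $E\subset\mathbb R^2$ is quasiconvex if there is $C$ such that any $x,y\in E$ are joined by a path in $E$ of length $\le C|x-y|$. *)

(* Defs.v *)
From Stdlib Require Import Reals Lra List.
From Coquelicot Require Import Rbar Lub.
Import ListNotations.
Open Scope R_scope.

Definition letter (m i : nat) : Prop := (1 <= i <= m)%nat.

Definition fword (m : nat) (v : list nat) : Prop := Forall (letter m) v.

Definition iword (m : nat) (w : nat -> nat) : Prop := forall n, letter m (w n).

Definition pref (w : nat -> nat) (n : nat) : list nat := map w (seq 0 n).

Definition ibegins (w : nat -> nat) (u : list nat) : Prop := pref w (length u) = u.

Definition fbegins (u v : list nat) : Prop := firstn (length v) u = v.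

(* Edge sets E_k of the graphs G_k (as symmetric relations on A^k).
   E_1 = {{1,i} : i <> 1},
   E_{k+1} = {{1 2^(k), i 1^(k)} : i in A\{1}} u {{iw,iu} : i in A, {w,u} in E_k}. *)
Fixpoint Edge (m k : nat) (x y : list nat) : Prop :=
  match k with
  | O => False
  | S k' =>
    match k' with
    | O => exists i, (2 <= i <= m)%nat /\
             ((x = [1%nat] /\ y = [i]) \/ (x = [i] /\ y = [1%nat]))
    | S _ =>
      (exists i, (2 <= i <= m)%nat /\
         ((x = 1%nat :: repeat 2%nat k' /\ y = i :: repeat 1%nat k') \/
          (x = i :: repeat 1%nat k' /\ y = 1%nat :: repeat 2%nat k')))
      \/ (exists i w u, letter m i /\ x = i :: w /\ y = i :: u /\ Edge m k' w u)
    end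
  end.

Definition wedge_half (m : nat) (u1 u2 : list nat) (w : nat -> nat) : Prop :=
  iword m w /\ ibegins w u1 /\
  forall n, (n > Nat.max (length u1) (length u2))%nat ->
    exists u, length u = n /\ fword m u /\ fbegins u u2 /\ Edge m n (pref w n) u.

Definition wedge (m : nat) (u1 u2 : list nat) (w : nat -> nat) : Prop :=
  wedge_half m u1 u2 w \/ wedge_half m u2 u1 w.

Definition wedge_nonempty (m : nat) (u1 u2 : list nat) : Prop :=
  exists w, wedge m u1 u2 w.

Fixpoint consecutive_wedges (m : nat) (vs : list (list nat)) : Prop :=
  match vs with
  | v1 :: ((v2 :: _) as rest) => wedge_nonempty m v1 v2 /\ consecutive_wedges m rest
  | _ => True
  end.

Definition chain (m : nat) (w w' : nat -> nat) (vs : list (list nat)) : Prop :=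
  vs <> [] /\ Forall (fword m) vs /\
  ibegins w (hd [] vs) /\ ibegins w' (last vs []) /\
  consecutive_wedges m vs.

Definition weight (a : nat -> R) : Prop :=
  (forall n, (1 <= n)%nat -> 0 < a n <= 1/2) /\
  (forall n, (1 <= n)%nat -> a (S n) <= a n) /\
  a 1%nat = 1/2 /\ a 2%nat = 1/2 /\
  Un_cv a 0.

Fixpoint Delta (a : nat -> R) (v : list nat) : R :=
  match v with
  | [] => 1
  | i :: v' => a i * Delta a v'
  end.

Definition chain_sum (a : nat -> R) (vs : list (list nat)) : R :=
  fold_right (fun v s => Delta a v + s) 0 vs.

Definition chain_sums (m : nat) (a : nat -> R) (w u : nat -> nat) : R -> Prop :=
  fun r => exists vs, chain m w u vs /\ r = chain_sum a vs.

(* rho(w,u) = inf of chain sums (always finite: the one-element chain [eps]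
   gives 1, and all sums are >= 0). *)
Definition rho (m : nat) (a : nat -> R) (w u : nat -> nat) : R :=
  real (Glb_Rbar (chain_sums m a w u)).

Definition dist2 (p q : R * R) : R :=
  sqrt ((fst p - fst q) ^ 2 + (snd p - snd q) ^ 2).

(* f : A^N -> R^2 induces a bi-Lipschitz embedding of T^{m,a} = A^N/{rho=0}
   (with the induced metric) into R^2. *)
Definition bilip_embedding (m : nat) (a : nat -> R) (f : (nat -> nat) -> R * R) : Prop :=
  exists L, 0 < L /\
    forall w u, iword m w -> iword m u ->
      rho m a w u / L <= dist2 (f w) (f u) <= L * rho m a w u.

Definition path_continuous (g : R -> R * R) : Prop :=
  forall t, 0 <= t <= 1 -> forall eps, 0 < eps ->
    exists delta, 0 < delta /\
      forall s, 0 <= s <= 1 -> Rabs (s - t) < delta -> dist2 (g s) (g t) < eps.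

Fixpoint poly_sum (g : R -> R * R) (t : nat -> R) (n : nat) : R :=
  match n with
  | O => 0
  | S k => poly_sum g t k + dist2 (g (t (S k))) (g (t k))
  end.

Definition path_length_le (g : R -> R * R) (ell : R) : Prop :=
  forall (n : nat) (t : nat -> R), t 0%nat = 0 -> t n = 1 ->
    (forall i, (i < n)%nat -> t i <= t (S i)) ->
    poly_sum g t n <= ell.

Definition quasiconvex (E : R * R -> Prop) : Prop :=
  exists C, forall x y, E x -> E y ->
    exists g : R -> R * R,
      path_continuous g /\ (forall t, 0 <= t <= 1 -> E (g t)) /\
      g 0 = x /\ g 1 = y /\ path_length_le g (C * dist2 x y).

Definition image (m : nat) (f : (nat -> nat) -> R * R) : R * R -> Prop :=
  fun p => exists w, iword m w /\ f w = p.

(* Submission.v *)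
Require Import Defs.
From Stdlib Require Import Reals Lra Lia List Arith Classical.
From Coquelicot Require Import Coquelicot.
Import ListNotations.
Open Scope R_scope.

Definition scons (k:nat) (w:nat->nat) : nat->nat :=
  fun n => match n with O => k | S n' => w n' end.
Definition shift (w:nat->nat) : nat -> nat := fun n => w (S n).
Fixpoint prepend (v:list nat) (w:nat->nat) : nat -> nat :=
  match v with [] => w | k::v' => scons k (prepend v' w) end.
Definition shiftn (n:nat) (w:nat->nat) : nat -> nat := fun k => w (n + k)%nat.
Definition cst (k:nat) : nat -> nat := fun _ => k.

Lemma pref_length w n : length (pref w n) = n.
Proof. unfold pref. rewrite length_map, length_seq. reflexivity. Qed.

Lemma pref_S w n : pref w (S n) = w O :: pref (shift w) n.
Proof.
  unfold pref, shift. simpl. f_equal. rewrite <- seq_shift, map_map. reflexivity.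
Qed.

Lemma pref_ext x y n : (forall k, x k = y k) -> pref x n = pref y n.
Proof. intros H. unfold pref. apply map_ext. auto. Qed.

Lemma pref_scons k w n : pref (scons k w) (S n) = k :: pref w n.
Proof. rewrite pref_S. reflexivity. Qed.

Lemma pref_Sr w n : pref w (S n) = pref w n ++ [w n].
Proof. unfold pref. rewrite seq_S, map_app. reflexivity. Qed.

Lemma pref_prepend v w n : pref (prepend v w) (length v + n) = v ++ pref w n.
Proof.
  induction v as [|k v IH]; simpl. reflexivity.
  rewrite pref_scons, IH. reflexivity.
Qed.

Lemma pref_prepend_le v w n : (n <= length v)%nat -> pref (prepend v w) n = firstn n v.
Proof.
  revert n. induction v as [|k v IH]; intros n Hn; simpl in *.
  - assert (n = O) by lia. subst. reflexivity.
  - destruct n. reflexivity. rewrite pref_scons, IH by lia. reflexivity.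
Qed.

Lemma ibegins_prepend v w : ibegins (prepend v w) v.
Proof. unfold ibegins. rewrite pref_prepend_le by lia. apply firstn_all. Qed.

Lemma prepend_app u v w k : prepend (u ++ v) w k = prepend u (prepend v w) k.
Proof.
  revert k. induction u as [|h u IH]; intros k; simpl. reflexivity.
  destruct k; simpl. reflexivity. apply IH.
Qed.

Lemma prepend_ext v x y : (forall k, x k = y k) -> forall k, prepend v x k = prepend v y k.
Proof.
  intros H. induction v as [|h v IH]; intros k; simpl. auto.
  destruct k; simpl; auto.
Qed.

Lemma prepend_nth v w k : (k < length v)%nat -> prepend v w k = nth k v O.
Proof.
  revert k; induction v as [|h v IH]; intros k Hk; simpl in *. lia.
  destruct k. reflexivity. simpl. apply IH. lia.
Qed.

Lemma prepend_after v w k : prepend v w (length v + k)%nat = w k.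
Proof. induction v as [|h v IH]; simpl; auto. Qed.

Lemma pref_nth w n k : (k < n)%nat -> nth k (pref w n) O = w k.
Proof.
  intros H. unfold pref. rewrite nth_indep with (d':= w O) by (rewrite length_map, length_seq; lia).
  rewrite map_nth, seq_nth by lia. reflexivity.
Qed.

Lemma ibegins_decomp x v : ibegins x v -> forall k, x k = prepend v (shiftn (length v) x) k.
Proof.
  intros H k. unfold ibegins in H.
  destruct (Nat.lt_ge_cases k (length v)) as [Hk|Hk].
  - rewrite prepend_nth by auto. rewrite <- H. rewrite pref_nth; auto.
  - replace k with (length v + (k - length v))%nat by lia. rewrite prepend_after.
    unfold shiftn. reflexivity.
Qed.

Lemma ibegins_ext x y v : (forall k, x k = y k) -> ibegins x v -> ibegins y v.
Proof. unfold ibegins. intros H H1. rewrite <- (pref_ext x y) by auto. auto. Qed.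

Lemma app_inv_len {A} (a b c d : list A) : a ++ b = c ++ d -> length a = length c -> a = c /\ b = d.
Proof.
  revert c. induction a as [|h a IH]; intros [|h' c] H L; simpl in *; try lia; auto.
  inversion H. subst. destruct (IH c) as [-> ->]; auto.
Qed.

Lemma ibegins_app x u v : ibegins x (u ++ v) -> ibegins x u.
Proof.
  unfold ibegins. intros H. rewrite length_app in H.
  unfold pref in *. rewrite seq_app, map_app in H.
  apply app_inv_len in H. apply H. rewrite length_map, length_seq. reflexivity.
Qed.


Lemma ibegins_pref x n : ibegins x (pref x n).
Proof. unfold ibegins. rewrite pref_length. reflexivity. Qed.

Lemma pref_firstn x n k : (k <= n)%nat -> firstn k (pref x n) = pref x k.
Proof.
  intros H. replace n with (k + (n - k))%nat by lia. unfold pref. rewrite seq_app, map_app.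
  rewrite firstn_app. rewrite length_map, length_seq, Nat.sub_diag. simpl.
  rewrite app_nil_r. rewrite firstn_all2 by (rewrite length_map, length_seq; lia). reflexivity.
Qed.

Lemma ibegins_pref_le x v n : ibegins x v -> (length v <= n)%nat -> firstn (length v) (pref x n) = v.
Proof. intros H Hn. rewrite pref_firstn by auto. exact H. Qed.

Lemma iword_shift m w : iword m w -> iword m (shift w).
Proof. unfold iword, shift. auto. Qed.
Lemma iword_shiftn m n w : iword m w -> iword m (shiftn n w).
Proof. unfold iword, shiftn. auto. Qed.
Lemma iword_scons m k w : letter m k -> iword m w -> iword m (scons k w).
Proof. unfold iword. intros Hk Hw [|n]; simpl; auto. Qed.
Lemma iword_prepend m v w : fword m v -> iword m w -> iword m (prepend v w).
Proof.
  intros Hv Hw. induction Hv; simpl; auto. apply iword_scons; auto.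
Qed.
Lemma iword_cst m k : letter m k -> iword m (cst k).
Proof. unfold iword, cst. auto. Qed.
Lemma fword_pref m w n : iword m w -> fword m (pref w n).
Proof.
  intros H. unfold fword, pref. apply Forall_forall. intros x Hx.
  apply in_map_iff in Hx. destruct Hx as [k [<- _]]. apply H.
Qed.
Lemma fword_app m u v : fword m u -> fword m v -> fword m (u ++ v).
Proof. unfold fword. intros. apply Forall_app; auto. Qed.
Lemma fword_repeat m k n : letter m k -> fword m (repeat k n).
Proof. unfold fword. intros. apply Forall_forall. intros x Hx. apply repeat_spec in Hx. subst. auto. Qed.

Lemma exists_min (P : nat -> Prop) : (forall n, P n \/ ~ P n) ->
  forall n, P n -> exists n0, P n0 /\ forall k, (k < n0)%nat -> ~ P k.
Proof.
  intros Hd n. induction n as [n IH] using lt_wf_ind. intros Hn.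
  destruct (classic (exists k, (k < n)%nat /\ P k)) as [[k [Hk Pk]]|Hno].
  - apply (IH k Hk Pk).
  - exists n. split; auto. intros k Hk Pk. apply Hno. eauto.
Qed.

Lemma Edge_lift m h k s t : letter m h -> Edge m k s t -> Edge m (S k) (h::s) (h::t).
Proof.
  intros Hh HE. destruct k as [|k]. simpl in HE. contradiction.
  simpl. right. exists h, s, t. auto.
Qed.

Lemma Edge_prefix m v k s t : fword m v -> Edge m k s t -> Edge m (length v + k) (v ++ s) (v ++ t).
Proof.
  intros Hv HE. induction Hv as [|h v Hh Hv IH]; simpl; auto.
  apply Edge_lift; auto.
Qed.

Lemma Edge_base m i k : (2 <= i <= m)%nat ->
  Edge m (S k) (1%nat :: repeat 2%nat k) (i :: repeat 1%nat k).
Proof.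
  intros Hi. destruct k as [|k]; simpl.
  - exists i. split; auto.
  - left. exists i. split; auto.
Qed.

Lemma Edge_base' m i k : (2 <= i <= m)%nat ->
  Edge m (S k) (i :: repeat 1%nat k) (1%nat :: repeat 2%nat k).
Proof.
  intros Hi. destruct k as [|k]; simpl.
  - exists i. split; auto.
  - left. exists i. split; auto.
Qed.

Definition other (a : nat) : nat := if Nat.eqb a 1 then 2%nat else 1%nat.

Lemma letter_other m a : (2 <= m)%nat -> letter m (other a).
Proof. unfold other, letter. destruct (Nat.eqb a 1); lia. Qed.

Lemma Edge_last m r a : (2 <= m)%nat -> fword m r -> letter m a ->
  Edge m (length r + 1) (r ++ [a]) (r ++ [other a]).
Proof.
  intros Hm Hr Ha. apply Edge_prefix; auto. unfold other. unfold letter in Ha.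
  destruct (Nat.eqb_spec a 1).
  - subst. apply (Edge_base m 2 0). lia.
  - apply (Edge_base' m a 0). lia.
Qed.

Lemma Edge_inv m n s t : Edge m n s t ->
  exists r i k, fword m r /\ (2 <= i <= m)%nat /\
   ((s = r ++ 1%nat :: repeat 2%nat k /\ t = r ++ i :: repeat 1%nat k) \/
    (s = r ++ i :: repeat 1%nat k /\ t = r ++ 1%nat :: repeat 2%nat k)).
Proof.
  revert s t. induction n as [|n IH]; intros s t HE. simpl in HE. contradiction.
  destruct n as [|n].
  - simpl in HE. destruct HE as [i [Hi [[-> ->]|[-> ->]]]].
    + exists [], i, O. split; [constructor|split; [auto|]]. left; auto.
    + exists [], i, O. split; [constructor|split; [auto|]]. right; auto.
  - simpl in HE. destruct HE as [[i [Hi [[-> ->]|[-> ->]]]]|[h [w [u [Hh [-> [-> HE]]]]]]].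
    + exists [], i, (S n). split; [constructor|split; [auto|]]. left; auto.
    + exists [], i, (S n). split; [constructor|split; [auto|]]. right; auto.
    + destruct (IH w u HE) as [r [i [k [Hr [Hi H]]]]].
      exists (h :: r), i, k. split. constructor; auto. split; auto.
      destruct H as [[-> ->]|[-> ->]]; [left|right]; auto.
Qed.

Lemma pref_cst c j : pref (cst c) j = repeat c j.
Proof.
  induction j as [|j IH]. reflexivity. rewrite pref_Sr, IH. unfold cst.
  simpl. symmetry. apply repeat_cons.
Qed.

Lemma pref_bw v k c j : pref (prepend v (scons k (cst c))) (length v + S j) = v ++ k :: repeat c j.
Proof. rewrite pref_prepend, pref_scons, pref_cst. reflexivity. Qed.

Lemma wedge_sym m u1 u2 : wedge_nonempty m u1 u2 -> wedge_nonempty m u2 u1.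
Proof. unfold wedge_nonempty, wedge. intros [w [H|H]]; exists w; auto. Qed.

Lemma wedge_common m z v1 v2 : (2 <= m)%nat -> iword m z -> ibegins z v1 -> ibegins z v2 ->
  wedge_nonempty m v1 v2.
Proof.
  intros Hm Hz H1 H2. exists z. left. split; [auto|split; [auto|]].
  intros n Hn. destruct n as [|n]. lia.
  exists (pref z n ++ [other (z n)]). split; [|split; [|split]].
  - rewrite length_app, pref_length. simpl. lia.
  - apply fword_app. apply fword_pref; auto. constructor. apply letter_other; auto. constructor.
  - unfold fbegins. rewrite firstn_app. rewrite pref_length.
    replace (length v2 - n)%nat with O by lia. simpl. rewrite app_nil_r.
    apply ibegins_pref_le; auto. lia.
  - rewrite pref_Sr. replace (S n) with (length (pref z n) + 1)%nat by (rewrite pref_length; lia).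
    apply Edge_last; auto. apply fword_pref; auto.
Qed.

Lemma wedge_ident m v i N : (2 <= m)%nat -> fword m v -> (2 <= i <= m)%nat -> (length v < N)%nat ->
  wedge_nonempty m (pref (prepend v (scons i (cst 1%nat))) N) (pref (prepend v (scons 1%nat (cst 2%nat))) N).
Proof.
  intros Hm Hv Hi HN. exists (prepend v (scons 1%nat (cst 2%nat))). right.
  split; [|split].
  - apply iword_prepend; auto. apply iword_scons. unfold letter; lia. apply iword_cst. unfold letter; lia.
  - apply ibegins_pref.
  - intros n Hn. rewrite !pref_length in Hn.
    exists (pref (prepend v (scons i (cst 1%nat))) n). split; [|split; [|split]].
    + apply pref_length.
    + apply fword_pref. apply iword_prepend; auto. apply iword_scons. unfold letter; lia.
      apply iword_cst. unfold letter; lia.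
    + unfold fbegins. rewrite pref_length. apply pref_firstn. lia.
    + replace n with (length v + S (n - length v - 1))%nat by lia.
      rewrite !pref_bw. apply Edge_prefix; auto. apply Edge_base. auto.
Qed.

Lemma cos_le_decr x y : 0 <= x -> x <= y -> y <= PI -> cos y <= cos x.
Proof.
  intros. destruct (Req_dec x y) as [->|Hne]. lra.
  left. apply cos_decreasing_1; lra.
Qed.

Lemma cos_ge_sin_half b p : 0 < b -> b < PI -> Rabs p <= PI/2 - b/2 -> sin (b/2) <= cos p.
Proof.
  intros Hb HbP Hp. rewrite <- cos_shift.
  destruct (Rle_dec 0 p).
  - rewrite Rabs_right in Hp by lra. apply cos_le_decr; lra.
  - rewrite Rabs_left in Hp by lra. rewrite <- (cos_neg p). apply cos_le_decr; lra.
Qed.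

Definition rotc (th:R) : C := (cos th, sin th).

Lemma rotc_plus a b : (rotc a * rotc b = rotc (a + b))%C.
Proof.
  unfold rotc, Cmult. simpl. rewrite cos_plus, sin_plus. f_equal; ring.
Qed.

Lemma rotc_0 : rotc 0 = 1%C.
Proof. unfold rotc. rewrite cos_0, sin_0. reflexivity. Qed.

Lemma Cmod_rotc a : Cmod (rotc a) = 1.
Proof.
  unfold Cmod, rotc. simpl fst; simpl snd.
  assert (cos a ^ 2 + sin a ^ 2 = 1) as ->. { pose proof (sin2_cos2 a). unfold Rsqr in H. simpl. nra. }
  apply sqrt_1.
Qed.

Lemma rotc_minus_PI a : rotc (a - PI) = (- rotc a)%C.
Proof.
  unfold rotc, Copp. rewrite cos_minus, sin_minus, cos_PI, sin_PI. simpl. f_equal; ring.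
Qed.

Lemma Cmod_sym z w : Cmod (z - w) = Cmod (w - z).
Proof. rewrite <- Cmod_opp. f_equal. ring. Qed.

Lemma Cmod_fst z : Rabs (fst z) <= Cmod z.
Proof. apply re_le_Cmod. Qed.

Lemma Cmod_snd z : Rabs (snd z) <= Cmod z.
Proof.
  unfold Cmod. rewrite <- sqrt_Rsqr_abs. apply sqrt_le_1. apply Rle_0_sqr.
  pose proof (pow2_ge_0 (fst z)); pose proof (pow2_ge_0 (snd z)). nra.
  unfold Rsqr. pose proof (pow2_ge_0 (fst z)). simpl. nra.
Qed.

Lemma Cmod_RtoC_pos a : 0 <= a -> Cmod (RtoC a) = a.
Proof. intros. rewrite Cmod_R. apply Rabs_right. lra. Qed.

Lemma Cmod_tri3 a b c : Cmod (a - c) <= Cmod (a - b) + Cmod (b - c).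
Proof. replace (a - c)%C with ((a - b) + (b - c))%C by ring. apply Cmod_triangle. Qed.

Lemma Cmod_sq z : Cmod z ^ 2 = fst z ^ 2 + snd z ^ 2.
Proof. apply Cmod2_alt. Qed.

Lemma le_of_sq a b : 0 <= b -> a ^ 2 <= b ^ 2 -> a <= b.
Proof. intros. nra. Qed.

Section Cone.
Variable beta : R.
Hypothesis Hb0 : 0 < beta.
Hypothesis HbPI : beta <= PI / 4.
Definition tau := sin beta / cos beta.
Definition kappa := sin (beta / 2) * cos beta.

Lemma cosb_pos : 0 < cos beta.
Proof. pose proof PI_RGT_0. apply cos_gt_0; lra. Qed.
Lemma sinb_pos : 0 < sin beta.
Proof. pose proof PI_RGT_0. apply sin_gt_0; lra. Qed.
Lemma tau_cos : tau * cos beta = sin beta.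
Proof. unfold tau. field. pose proof cosb_pos. lra. Qed.
Lemma tau_pos : 0 < tau.
Proof. unfold tau. pose proof cosb_pos; pose proof sinb_pos. apply Rdiv_lt_0_compat; lra. Qed.
Lemma tau_le_1 : tau <= 1.
Proof.
  pose proof cosb_pos; pose proof sinb_pos. pose proof PI_RGT_0.
  assert (sin beta <= cos beta).
  { rewrite <- cos_shift. apply cos_le_decr; lra. }
  unfold tau. apply Rmult_le_reg_r with (cos beta); auto. field_simplify; lra.
Qed.
Lemma kappa_pos : 0 < kappa.
Proof.
  unfold kappa. pose proof cosb_pos. pose proof PI_RGT_0.
  assert (0 < sin (beta/2)) by (apply sin_gt_0; lra). nra.
Qed.

Definition cone0 (d : C) := 0 <= snd d /\ snd d <= tau * fst d.

Lemma cone_key d p : cone0 d -> - (PI/2 - beta/2) <= p -> p + beta <= PI/2 - beta/2 ->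
  kappa * Cmod d <= fst (rotc p * d)%C.
Proof.
  intros [Hy1 Hy2] Hp1 Hp2. pose proof cosb_pos. pose proof sinb_pos. pose proof PI_RGT_0.
  pose proof tau_cos. pose proof tau_pos.
  destruct d as [x y]. simpl in *. unfold rotc, Cmult. simpl.
  assert (Hx : 0 <= x) by nra.
  assert (C1 : sin (beta/2) <= cos p) by (apply cos_ge_sin_half; try lra; apply Rabs_le; lra).
  assert (C2 : sin (beta/2) <= cos (p + beta)) by (apply cos_ge_sin_half; try lra; apply Rabs_le; lra).
  assert (Hs2 : 0 < sin (beta/2)) by (apply sin_gt_0; lra).
  assert (Hmain : x * sin (beta/2) <= x * cos p - y * sin p).
  { destruct (Rle_dec (sin p) 0).
    - nra.
    - rewrite cos_plus in C2.
      assert (Hyt : y * sin p <= tau * x * sin p) by nra.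
      assert (Heq : (cos p - tau * sin p) * cos beta = cos p * cos beta - sin p * sin beta).
      { rewrite Rmult_minus_distr_r, Rmult_assoc, (Rmult_comm (sin p)), <- Rmult_assoc, H2. ring. }
      assert (Hc1 : cos beta <= 1) by apply COS_bound.
      assert (Hge : cos p * cos beta - sin p * sin beta <= cos p - tau * sin p) by nra.
      nra. }
  assert (Hcm : cos beta * Cmod (x, y) <= x).
  { apply le_of_sq; auto. rewrite Rpow_mult_distr, Cmod_sq. simpl.
    assert (y * cos beta <= x * sin beta) by nra.
    pose proof (sin2_cos2 beta) as Hsc. unfold Rsqr in Hsc.
    assert (0 <= y * cos beta) by nra.
    assert (Q : (y * cos beta) * (y * cos beta) <= (x * sin beta) * (x * sin beta))
      by (apply Rmult_le_compat; lra).
    assert (E : x * x = x * x * (sin beta * sin beta + cos beta * cos beta)) by (rewrite Hsc; ring).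
    lra. }
  unfold kappa. nra.
Qed.

Definition InSector (s : R) (w : C) := cone0 (rotc (- s) * w)%C.

Lemma sep_key s1 s2 w1 w2 : InSector s1 w1 -> InSector s2 w2 ->
  2 * beta <= s2 - s1 <= PI - beta ->
  kappa * (Cmod w1 + Cmod w2) <= Cmod (w1 - w2).
Proof.
  intros H1 H2 Hs. pose proof PI_RGT_0.
  set (nu := (s1 + beta + s2) / 2 - PI / 2).
  set (P := fun w => fst (rotc (- nu) * w)%C).
  assert (HP : forall w, P w <= Cmod w).
  { intros w. unfold P. eapply Rle_trans. apply Rle_abs. eapply Rle_trans. apply Cmod_fst.
    rewrite Cmod_mult, Cmod_rotc. lra. }
  assert (E1 : w1 = (rotc s1 * (rotc (- s1) * w1))%C).
  { rewrite Cmult_assoc, rotc_plus. replace (s1 + - s1) with 0 by ring. rewrite rotc_0. ring. }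
  assert (E2 : w2 = (rotc s2 * (rotc (- s2) * w2))%C).
  { rewrite Cmult_assoc, rotc_plus. replace (s2 + - s2) with 0 by ring. rewrite rotc_0. ring. }
  assert (M1 : Cmod (rotc (- s1) * w1)%C = Cmod w1) by (rewrite Cmod_mult, Cmod_rotc; ring).
  assert (M2 : Cmod (rotc (- s2) * w2)%C = Cmod w2) by (rewrite Cmod_mult, Cmod_rotc; ring).
  assert (P1 : kappa * Cmod w1 <= P w1).
  { unfold P. rewrite E1 at 2. rewrite Cmult_assoc, rotc_plus. rewrite <- M1.
    apply cone_key; auto; unfold nu; lra. }
  assert (P2 : kappa * Cmod w2 <= - P w2).
  { unfold P. rewrite E2 at 2. rewrite Cmult_assoc, rotc_plus.
    replace (- nu + s2) with ((s2 - nu - PI) + PI) by ring.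
    rewrite <- rotc_plus. replace (rotc PI) with (RtoC (-1)).
    2:{ unfold rotc. rewrite cos_PI, sin_PI. reflexivity. }
    replace (rotc (s2 - nu - PI) * RtoC (-1) * (rotc (- s2) * w2))%C
      with (- (rotc (s2 - nu - PI) * (rotc (- s2) * w2)))%C by ring.
    simpl fst. rewrite Ropp_involutive. rewrite <- M2.
    apply cone_key; auto; unfold nu; lra. }
  assert (Lin : P (w1 - w2)%C = P w1 - P w2).
  { unfold P. replace (rotc (- nu) * (w1 - w2))%C with (rotc (- nu) * w1 - rotc (- nu) * w2)%C by ring.
    reflexivity. }
  pose proof (HP (w1 - w2)%C). lra.
Qed.
End Cone.

Section Geo.
Variable m : nat.
Hypothesis Hm : (2 <= m)%nat.

Definition beta := PI / (2 * INR m).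
Definition tu := tau beta.
Definition kp := kappa beta.
Definition eta := tu / 4.
Definition aw (n:nat) : R := if Nat.leb n 2 then 1/2 else eta / INR n.
Definition snat (k:nat) : nat := if Nat.eqb k 1 then (2*m - 1)%nat else (2*(k-2))%nat.
Definition sigma k := beta * INR (snat k).
Definition theta k := if Nat.eqb k 1 then 0 else sigma k.
Definition cpt : C := (1/2, 0).
Definition bvec k : C := if Nat.eqb k 1 then 0%C else cpt.
Definition psi (k:nat) (z:C) : C := (bvec k + RtoC (aw k) * rotc (theta k) * z)%C.
Definition fixp (e:nat) : C := if Nat.eqb e 2 then (1,0) else 0%C.
Definition ebase (i:nat) : nat := if Nat.eqb i 1 then 2%nat else 1%nat.

Lemma INRm2 : 2 <= INR m.
Proof. replace 2 with (INR 2) by (simpl; ring). apply le_INR. auto. Qed.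

Lemma beta_pos : 0 < beta.
Proof. unfold beta. pose proof PI_RGT_0. pose proof INRm2. apply Rdiv_lt_0_compat; lra. Qed.
Lemma beta_le : beta <= PI / 4.
Proof.
  unfold beta. pose proof PI_RGT_0. pose proof INRm2.
  apply Rmult_le_reg_r with (2 * INR m). lra. field_simplify; try lra. nra.
Qed.
Lemma beta_2m : beta * (2 * INR m) = PI.
Proof. unfold beta. pose proof INRm2. field. lra. Qed.

Lemma tu_pos : 0 < tu. Proof. apply tau_pos. apply beta_pos. apply beta_le. Qed.
Lemma tu_le1 : tu <= 1. Proof. apply tau_le_1. apply beta_pos. apply beta_le. Qed.
Lemma kp_pos : 0 < kp. Proof. apply kappa_pos. apply beta_pos. apply beta_le. Qed.

Lemma aw_pos n : 0 < aw n.
Proof.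
  unfold aw. destruct (Nat.leb n 2) eqn:E. lra. apply Nat.leb_gt in E.
  unfold eta. pose proof tu_pos. apply Rdiv_lt_0_compat. lra. apply lt_0_INR. lia.
Qed.

Lemma aw_small n : (3 <= n)%nat -> aw n <= tu / 12.
Proof.
  intros H. unfold aw. destruct (Nat.leb_spec n 2). lia. unfold eta.
  pose proof tu_pos. assert (3 <= INR n) by (replace 3 with (INR 3) by (simpl; ring); apply le_INR; auto).
  apply Rmult_le_reg_r with (INR n). lra. field_simplify; try lra. nra.
Qed.

Lemma aw_12 n : (n <= 2)%nat -> aw n = 1/2.
Proof. intros. unfold aw. destruct (Nat.leb_spec n 2). auto. lia. Qed.

Lemma aw_le_half n : aw n <= 1/2.
Proof.
  destruct (Nat.le_gt_cases n 2). rewrite aw_12 by lia; lra.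
  pose proof (aw_small n). pose proof tu_le1. assert (aw n <= tu/12) by (apply H0; lia). lra.
Qed.

Lemma aw_weight : weight aw.
Proof.
  split; [|split; [|split; [|split]]].
  - intros n _. split. apply aw_pos. apply aw_le_half.
  - intros n Hn. destruct (Nat.le_gt_cases (S n) 2).
    + rewrite !aw_12 by lia. lra.
    + destruct (Nat.le_gt_cases n 2).
      * rewrite (aw_12 n) by lia. apply aw_le_half.
      * unfold aw. destruct (Nat.leb_spec (S n) 2). lia. destruct (Nat.leb_spec n 2). lia.
        unfold eta. pose proof tu_pos.
        assert (0 < INR n) by (apply lt_0_INR; lia).
        rewrite S_INR. unfold Rdiv. apply Rmult_le_compat_l. lra.
        apply Rinv_le_contravar; lra.
  - apply aw_12; lia.
  - apply aw_12; lia.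
  - intros eps Heps. destruct (archimed (eta / eps)) as [H1 _].
    assert (He : 0 < eta) by (unfold eta; pose proof tu_pos; lra).
    assert (0 < eta / eps) by (apply Rdiv_lt_0_compat; lra).
    destruct (INR_unbounded (Rmax (eta/eps) 3)) as [N HN].
    exists N. intros n Hn. unfold Rdist. rewrite Rminus_0_r.
    assert (INR N <= INR n) by (apply le_INR; lia).
    assert (3 < INR n) by (pose proof (Rmax_r (eta/eps) 3); lra).
    assert (eta/eps < INR n) by (pose proof (Rmax_l (eta/eps) 3); lra).
    assert ((3 <= n)%nat).
    { destruct (Nat.le_gt_cases 3 n); auto. assert (Hn2 : INR n <= INR 2) by (apply le_INR; lia). simpl in Hn2. lra. }
    unfold aw. destruct (Nat.leb_spec n 2). lia.
    rewrite Rabs_right by (apply Rle_ge; apply Rlt_le; apply Rdiv_lt_0_compat; lra).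
    apply Rmult_lt_reg_r with (INR n). lra. unfold Rdiv. rewrite Rmult_assoc, Rinv_l by lra.
    apply Rmult_lt_reg_r with (/ eps). apply Rinv_0_lt_compat; lra.
    replace (eps * INR n * / eps) with (INR n) by (field; lra). lra.
Qed.

Lemma cos_sigma_sin k : 0 <= sigma k -> sigma k + beta <= PI ->
  0 <= sin (sigma k) /\ (cos (sigma k) < 0 -> 0 <= sin (sigma k) + tu * cos (sigma k)).
Proof.
  intros H1 H2. pose proof beta_pos. pose proof PI_RGT_0. split.
  - apply sin_ge_0; lra.
  - intros Hc. assert (0 <= sin (sigma k + beta)) by (apply sin_ge_0; lra).
    rewrite sin_plus in H3. pose proof (cosb_pos beta H beta_le).
    pose proof (tau_cos beta H beta_le). fold tu in H5.
    assert (sin (sigma k + beta) = cos beta * (sin (sigma k) + tu * cos (sigma k))).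
    { rewrite sin_plus. rewrite <- H5. ring. }
    rewrite sin_plus in H6. nra.
Qed.

Lemma snat_range k : letter m k -> (snat k <= 2 * m - 1)%nat.
Proof. unfold letter, snat. intros. destruct (Nat.eqb_spec k 1); lia. Qed.

Lemma sigma_sep i j : letter m i -> letter m j -> (snat i < snat j)%nat ->
  2 * beta <= sigma j - sigma i <= PI - beta.
Proof.
  intros Hi Hj Hlt. unfold sigma.
  assert (D : (2 <= snat j - snat i <= 2 * m - 1)%nat).
  { unfold snat in *. unfold letter in *.
    destruct (Nat.eqb_spec i 1); destruct (Nat.eqb_spec j 1); lia. }
  rewrite <- Rmult_minus_distr_l, <- minus_INR by lia.
  pose proof beta_pos as Bp. pose proof beta_2m as B2.
  assert (L1 : 2 <= INR (snat j - snat i)) by (replace 2 with (INR 2) by (simpl; ring); apply le_INR; lia).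
  assert (L2 : INR (snat j - snat i) <= INR (2 * m - 1)) by (apply le_INR; lia).
  rewrite (minus_INR (2*m) 1) in L2 by lia. rewrite mult_INR in L2. simpl in L2. nra.
Qed.

Lemma snat_inj i j : letter m i -> letter m j -> i <> j -> snat i <> snat j.
Proof. unfold snat, letter. intros. destruct (Nat.eqb_spec i 1); destruct (Nat.eqb_spec j 1); lia. Qed.

Definition inD (z : C) := 0 <= snd z /\ snd z <= tu * fst z /\ snd z <= tu * (1 - fst z).

Lemma inD_0 : inD 0%C.
Proof. unfold inD. simpl. pose proof tu_pos. repeat split; nra. Qed.

Lemma inD_bounds z : inD z -> 0 <= fst z <= 1 /\ 0 <= snd z <= 1/2.
Proof.
  unfold inD. intros [H1 [H2 H3]]. pose proof tu_pos. pose proof tu_le1.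
  assert (0 <= fst z) by nra. assert (fst z <= 1) by nra. nra.
Qed.

Lemma inD_Cmod z : inD z -> Cmod z <= 1.
Proof.
  intros H. pose proof (inD_bounds z H). destruct H as [H1 [H2 H3]]. pose proof tu_pos. pose proof tu_le1.
  apply le_of_sq. lra. rewrite Cmod_sq. 
  assert (snd z <= fst z) by nra. assert (snd z <= 1 - fst z) by nra. nra.
Qed.

Lemma psi_fst k z : fst (psi k z) = fst (bvec k) + aw k * (cos (theta k) * fst z - sin (theta k) * snd z).
Proof. unfold psi, rotc, Cplus, Cmult, RtoC. simpl. ring. Qed.
Lemma psi_snd k z : snd (psi k z) = snd (bvec k) + aw k * (sin (theta k) * fst z + cos (theta k) * snd z).
Proof. unfold psi, rotc, Cplus, Cmult, RtoC. simpl. ring. Qed.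

Lemma psi_dist k z w : Cmod (psi k z - psi k w) = aw k * Cmod (z - w).
Proof.
  unfold psi. replace (bvec k + RtoC (aw k) * rotc (theta k) * z - (bvec k + RtoC (aw k) * rotc (theta k) * w))%C
    with (RtoC (aw k) * rotc (theta k) * (z - w))%C by ring.
  rewrite !Cmod_mult, Cmod_rotc, Cmod_RtoC_pos. ring. pose proof (aw_pos k); lra.
Qed.

Lemma psi_1 z : psi 1 z = (fst z / 2, snd z / 2).
Proof.
  apply injective_projections; [rewrite psi_fst|rewrite psi_snd]; unfold theta, bvec; simpl;
  rewrite aw_12 by lia; rewrite cos_0, sin_0; simpl; field.
Qed.
Lemma psi_2 z : psi 2 z = (1/2 + fst z / 2, snd z / 2).
Proof.
  apply injective_projections; [rewrite psi_fst|rewrite psi_snd]; unfold theta, bvec, sigma, snat, cpt; simpl;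
  rewrite aw_12 by lia; rewrite Rmult_0_r, cos_0, sin_0; simpl; field.
Qed.

Lemma psi_c_ge2 k z : (2 <= k)%nat -> (psi k z - cpt = RtoC (aw k) * rotc (sigma k) * z)%C.
Proof.
  intros H. unfold psi, bvec, theta. destruct (Nat.eqb_spec k 1). lia. ring.
Qed.

Lemma psi_inD k z : letter m k -> inD z -> inD (psi k z).
Proof.
  intros Hk Hz. pose proof (inD_bounds z Hz) as Hb. pose proof Hz as [H1 [H2 H3]].
  pose proof tu_pos. pose proof tu_le1.
  destruct (Nat.eq_dec k 1) as [->|N1]. { rewrite psi_1. unfold inD in *. simpl. lra. }
  destruct (Nat.eq_dec k 2) as [->|N2]. { rewrite psi_2. unfold inD in *. simpl. lra. }
  unfold letter in Hk.
  assert (Hs : 0 <= sigma k /\ sigma k + beta <= PI).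
  { unfold sigma, snat. destruct (Nat.eqb_spec k 1). lia. pose proof beta_pos. pose proof beta_2m.
    split. apply Rmult_le_pos; [lra|apply pos_INR].
    assert (INR (2 * (k-2)) + 1 <= 2 * INR m) .
    { rewrite <- S_INR. replace 2 with (INR 2) by (simpl; ring). rewrite <- mult_INR. apply le_INR. lia. }
    nra. }
  destruct (cos_sigma_sin k) as [Ss Sc]; try tauto.
  pose proof (aw_small k ltac:(lia)). pose proof (aw_pos k).
  assert (Hz1 := inD_Cmod z Hz).
  set (w := (rotc (sigma k) * z)%C).
  assert (Ew : psi k z = (cpt + RtoC (aw k) * w)%C).
  { unfold w. rewrite Cmult_assoc, <- psi_c_ge2 by lia. ring. }
  assert (Wi : 0 <= snd w).
  { unfold w, rotc, Cmult. simpl. destruct (Rlt_dec (cos (sigma k)) 0).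
    - specialize (Sc r). nra.
    - nra. }
  assert (Wm : Cmod w <= 1) by (unfold w; rewrite Cmod_mult, Cmod_rotc; lra).
  pose proof (Cmod_fst w). pose proof (Cmod_snd w).
  apply Rabs_le_between in H6. apply Rabs_le_between in H7.
  assert (F1 : fst (psi k z) = 1/2 + aw k * fst w) by (rewrite Ew; unfold cpt; simpl; ring).
  assert (F2 : snd (psi k z) = aw k * snd w) by (rewrite Ew; unfold cpt; simpl; ring).
  clearbody w. unfold inD. rewrite F1, F2.
  assert (A1 : aw k * snd w <= aw k) by nra.
  assert (A2 : - aw k <= aw k * fst w <= aw k) by (split; nra).
  assert (A3 : tu * (aw k * fst w) >= - (tu * aw k)) by nra.
  assert (A4 : tu * (aw k * fst w) <= tu * aw k) by nra.
  assert (A5 : tu * aw k <= tu / 12) by nra.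
  split; [|split]; nra.
Qed.

Lemma fixp_fix e : (e = 1 \/ e = 2)%nat -> psi e (fixp e) = fixp e.
Proof.
  intros [->| ->]. rewrite psi_1. unfold fixp. simpl. apply injective_projections; simpl; field.
  rewrite psi_2. unfold fixp. simpl. apply injective_projections; simpl; field.
Qed.

Lemma ebase_12 i : (ebase i = 1 \/ ebase i = 2)%nat.
Proof. unfold ebase. destruct (Nat.eqb i 1); auto. Qed.

Lemma ebase_neq i : letter m i -> ebase i <> i \/ i = 2%nat.
Proof. unfold ebase, letter. intros. destruct (Nat.eqb_spec i 1); lia. Qed.

Lemma psi_center i : letter m i -> psi i (fixp (ebase i)) = cpt.
Proof.
  intros Hi. unfold ebase. destruct (Nat.eqb_spec i 1) as [->|N].
  - rewrite psi_1. unfold fixp, cpt. simpl. apply injective_projections; simpl; field.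
  - unfold fixp. simpl. unfold psi, bvec. destruct (Nat.eqb_spec i 1). lia. ring.
Qed.

Lemma psi_minus_c i z : letter m i -> Cmod (psi i z - cpt) = aw i * Cmod (z - fixp (ebase i)).
Proof.
  intros Hi. rewrite <- (psi_center i Hi) at 1. apply psi_dist.
Qed.

Lemma psi_sector i z : letter m i -> inD z -> InSector beta (sigma i) (psi i z - cpt).
Proof.
  intros Hi Hz. pose proof (inD_bounds z Hz) as Hb. pose proof Hz as [H1 [H2 H3]].
  pose proof tu_pos. unfold InSector, cone0. fold tu.
  destruct (Nat.eq_dec i 1) as [->|N1].
  - assert (Es : sigma 1 = PI - beta).
    { unfold sigma, snat. simpl Nat.eqb. cbv iota. rewrite minus_INR by lia. rewrite mult_INR.
      rewrite <- beta_2m. simpl. ring. }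
    rewrite Es. replace (- (PI - beta)) with (beta - PI) by ring.
    rewrite psi_1. unfold rotc, Cmult, cpt, Cminus, Cplus, Copp. simpl.
    rewrite cos_minus, sin_minus, cos_PI, sin_PI.
    pose proof (cosb_pos beta beta_pos beta_le) as Cb. pose proof (sinb_pos beta beta_pos beta_le) as Sb.
    pose proof (tau_cos beta beta_pos beta_le) as Tc. fold tu in Tc.
    rewrite <- Tc. clear Sb Tc.
    assert (P1 : 0 <= cos beta * (tu * (1 - fst z) - snd z)) by nra.
    assert (P2 : 0 <= cos beta * snd z * (tu * tu + 1)) by (apply Rmult_le_pos; [apply Rmult_le_pos; lra|nra]).
    split; nra.
  - unfold letter in Hi. rewrite psi_c_ge2 by lia.
    replace (rotc (- sigma i) * (RtoC (aw i) * rotc (sigma i) * z))%C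
      with (RtoC (aw i) * ((rotc (- sigma i) * rotc (sigma i)) * z))%C by ring.
    rewrite rotc_plus. replace (- sigma i + sigma i) with 0 by ring. rewrite rotc_0.
    unfold RtoC, Cmult. simpl. pose proof (aw_pos i). split; nra.
Qed.

Lemma G3 i j z z' : letter m i -> letter m j -> i <> j -> inD z -> inD z' ->
  kp * (Cmod (psi i z - cpt) + Cmod (psi j z' - cpt)) <= Cmod (psi i z - psi j z').
Proof.
  intros Hi Hj Hij Hz Hz'. pose proof (snat_inj i j Hi Hj Hij).
  assert (E : (psi i z - psi j z' = (psi i z - cpt) - (psi j z' - cpt))%C) by ring.
  destruct (Nat.lt_gt_cases (snat i) (snat j)) as [[Hl|Hl] _]; auto.
  - rewrite E. apply sep_key with (sigma i) (sigma j); try apply beta_pos; try apply beta_le.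
    apply psi_sector; auto. apply psi_sector; auto. apply sigma_sep; auto.
  - rewrite E, (Cmod_sym (psi i z - cpt)%C), Rplus_comm. apply sep_key with (sigma j) (sigma i); try apply beta_pos; try apply beta_le.
    apply psi_sector; auto. apply psi_sector; auto. apply sigma_sep; auto.
Qed.

Lemma G2 e k z : (e = 1 \/ e = 2)%nat -> letter m k -> k <> e -> inD z ->
  1/4 <= Cmod (psi k z - fixp e).
Proof.
  intros He Hk Hke Hz. pose proof (inD_bounds z Hz). unfold letter in Hk.
  assert (Hfar : (3 <= k)%nat -> 1/4 <= Cmod (psi k z - fixp e)).
  { intros H3. pose proof (aw_small k H3). pose proof tu_le1. pose proof (inD_Cmod z Hz).
    pose proof (psi_c_ge2 k z ltac:(lia)) as Ec.
    assert (Cmod (psi k z - cpt) <= 1/12).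
    { rewrite Ec, !Cmod_mult, Cmod_rotc, Cmod_RtoC_pos by (pose proof (aw_pos k); lra).
      pose proof (Cmod_ge_0 z). pose proof (aw_pos k). nra. }
    assert (Cmod (cpt - fixp e) = 1/2).
    { destruct He as [-> | ->].
      - replace (cpt - fixp 1)%C with (RtoC (1/2)) by
          (unfold fixp, cpt; simpl; apply injective_projections; simpl; ring).
        rewrite Cmod_R, Rabs_right; lra.
      - replace (cpt - fixp 2)%C with (RtoC (-1/2)) by
          (unfold fixp, cpt; simpl; apply injective_projections; simpl; field).
        rewrite Cmod_R, Rabs_left; lra. }
    pose proof (Cmod_tri3 cpt (psi k z) (fixp e)) as T3. rewrite (Cmod_sym cpt (psi k z)) in T3. lra. }
  destruct He as [-> | ->].
  - destruct (Nat.eq_dec k 2) as [->|N2]; [|apply Hfar; lia].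
    rewrite psi_2. unfold fixp. simpl. eapply Rle_trans; [|apply Cmod_fst]. simpl.
    rewrite Rabs_right; lra.
  - destruct (Nat.eq_dec k 1) as [->|N2]; [|apply Hfar; lia].
    rewrite psi_1. unfold fixp. simpl. eapply Rle_trans; [|apply Cmod_fst]. simpl.
    rewrite Rabs_left1; lra.
Qed.

End Geo.

Lemma half_pow_small eps : 0 < eps -> exists N, (1/2)^N < eps.
Proof.
  intros H. destruct (pow_lt_1_zero (1/2) ltac:(rewrite Rabs_right; lra) eps H) as [N HN].
  exists N. specialize (HN N (le_n N)). rewrite Rabs_right in HN; auto.
  apply Rle_ge, pow_le; lra.
Qed.

Lemma le_of_half_pow a b K : (forall n, a <= b + K * (1/2)^n) -> a <= b.
Proof.
  intros H. destruct (Rle_dec a b) as [|Hn]; auto. exfalso.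
  destruct (Rle_dec K 0).
  - specialize (H O). simpl in H. lra.
  - assert (0 < (a - b) / K) by (apply Rdiv_lt_0_compat; lra).
    destruct (half_pow_small _ H0) as [N HN]. specialize (H N).
    assert (K * (1/2)^N < a - b).
    { apply Rmult_lt_reg_r with (/ K). apply Rinv_0_lt_compat; lra.
      replace (K * (1/2)^N * / K) with ((1/2)^N) by (field; lra). exact HN. }
    lra.
Qed.

Lemma lim_bound (u B : nat -> R) : (forall n k, (n <= k)%nat -> Rabs (u k - u n) <= B n) ->
  (forall eps, 0 < eps -> exists N, B N < eps) ->
  is_lim_seq u (real (Lim_seq u)) /\ forall n, Rabs (real (Lim_seq u) - u n) <= B n.
Proof.
  intros H1 H2.
  assert (Hc : ex_finite_lim_seq u).
  { apply ex_lim_seq_cauchy_corr. intros eps. destruct (H2 (eps/2)) as [N HN]. destruct eps; simpl; lra.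
    exists N. intros n k Hn Hk. pose proof (H1 N n Hn). pose proof (H1 N k Hk).
    replace (u n - u k) with ((u n - u N) - (u k - u N)) by ring.
    eapply Rle_lt_trans. apply Rabs_triang. rewrite Rabs_Ropp. lra. }
  destruct Hc as [l Hl]. rewrite (is_lim_seq_unique _ _ Hl). simpl. split; auto.
  intros n. apply is_lim_seq_spec in Hl.
  apply le_of_half_pow with 1. intros k.
  assert (Hp : 0 < (1/2)^k) by (apply pow_lt; lra).
  destruct (Hl (mkposreal _ Hp)) as [N HN]. simpl in HN.
  specialize (HN (max N n) (Nat.le_max_l _ _)). specialize (H1 n (max N n) (Nat.le_max_r _ _)).
  replace (l - u n) with ((u (max N n) - u n) - (u (max N n) - l)) by ring.
  eapply Rle_trans. apply Rabs_triang. rewrite Rabs_Ropp. lra.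
Qed.

Section F.
Variable m : nat.
Hypothesis Hm : (2 <= m)%nat.

Fixpoint Psi (v : list nat) (z : C) : C :=
  match v with [] => z | k :: v' => psi m k (Psi v' z) end.
Definition Pw (w : nat -> nat) (n : nat) : C := Psi (pref w n) 0%C.
Definition fmap (w : nat -> nat) : C :=
  (real (Lim_seq (fun n => fst (Pw w n))), real (Lim_seq (fun n => snd (Pw w n)))).
Definition Dl (v : list nat) : R := Defs.Delta (aw m) v.

Lemma Psi_app u v z : Psi (u ++ v) z = Psi u (Psi v z).
Proof. induction u as [|k u IH]; simpl; congruence. Qed.

Lemma Psi_dist v z w : Cmod (Psi v z - Psi v w) = Dl v * Cmod (z - w).
Proof.
  unfold Dl. induction v as [|k v IH]; simpl. ring.
  rewrite (psi_dist m Hm), IH. ring.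
Qed.

Lemma Dl_nonneg v : 0 <= Dl v.
Proof.
  unfold Dl. induction v as [|k v IH]; simpl. lra. pose proof (aw_pos m Hm k). fold (Dl v) in *. nra.
Qed.

Lemma Dl_app u v : Dl (u ++ v) = Dl u * Dl v.
Proof. unfold Dl. induction u as [|k u IH]; simpl. ring. fold (Dl (u ++ v)) (Dl u) (Dl v) in *. rewrite IH. ring. Qed.

Lemma Dl_cons k v : Dl (k :: v) = aw m k * Dl v.
Proof. reflexivity. Qed.

Lemma Dl_le v : Dl v <= (1/2)^(length v).
Proof.
  induction v as [|k v IH]. unfold Dl; simpl; lra. simpl length. rewrite Dl_cons. simpl.
  pose proof (aw_le_half m Hm k). pose proof (aw_pos m Hm k). pose proof (Dl_nonneg v).
  apply Rmult_le_compat; lra.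
Qed.

Lemma Dl_le1 v : Dl v <= 1.
Proof.
  eapply Rle_trans. apply Dl_le. generalize (length v). intros n. induction n; simpl. lra.
  pose proof (pow_le (1/2) n ltac:(lra)). nra.
Qed.

Lemma Dl_repeat e k : (e <= 2)%nat -> Dl (repeat e k) = (1/2)^k.
Proof.
  intros He. induction k as [|k IH]. reflexivity. simpl repeat. rewrite Dl_cons, IH, aw_12 by lia. simpl. ring.
Qed.

Lemma Psi_inD v z : fword m v -> inD m z -> inD m (Psi v z).
Proof.
  intros Hv Hz. induction Hv; simpl; auto. apply (psi_inD m Hm); auto.
Qed.

Lemma psi0 k : Cmod (psi m k 0%C) <= 1/2.
Proof.
  replace (psi m k 0%C) with (bvec k) by (unfold psi; ring).
  unfold bvec, cpt. destruct (Nat.eqb k 1). rewrite Cmod_0. lra.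
  replace ((1/2, 0)) with (RtoC (1/2)) by reflexivity. rewrite Cmod_R, Rabs_right; lra.
Qed.

Lemma Pw_step w n : Cmod (Pw w (S n) - Pw w n) <= (1/2)^n / 2.
Proof.
  unfold Pw. rewrite pref_Sr, Psi_app. simpl.
  replace (Psi (pref w n) 0%C) with (Psi (pref w n) 0%C) by reflexivity.
  rewrite Psi_dist. pose proof (Dl_le (pref w n)). rewrite pref_length in H.
  pose proof (Dl_nonneg (pref w n)).
  replace (psi m (w n) 0%C - 0)%C with (psi m (w n) 0%C) by ring.
  pose proof (psi0 (w n)). pose proof (Cmod_ge_0 (psi m (w n) 0%C)).
  apply Rle_trans with ((1/2)^n * (1/2)). apply Rmult_le_compat; lra. lra.
Qed.


Lemma Pw_cauchy' w n j : Cmod (Pw w (n + j) - Pw w n) <= (1/2)^n * (1 - (1/2)^j).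
Proof.
  induction j as [|j IH].
  - replace (n + 0)%nat with n by lia. replace (Pw w n - Pw w n)%C with (RtoC 0) by ring. rewrite Cmod_0. simpl. lra.
  - replace (Pw w (n + S j) - Pw w n)%C with ((Pw w (S (n + j)) - Pw w (n + j)) + (Pw w (n + j) - Pw w n))%C
      by (replace (n + S j)%nat with (S (n + j)) by lia; ring).
    eapply Rle_trans. apply Cmod_triangle. pose proof (Pw_step w (n + j)).
    rewrite pow_add in H. simpl. lra.
Qed.

Lemma Pw_cauchy w n k : (n <= k)%nat -> Cmod (Pw w k - Pw w n) <= (1/2)^n.
Proof.
  intros H. replace k with (n + (k - n))%nat by lia. eapply Rle_trans. apply Pw_cauchy'.
  pose proof (pow_le (1/2) n ltac:(lra)). pose proof (pow_le (1/2) (k - n) ltac:(lra)). nra.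
Qed.

Lemma fmap_approx w n : Cmod (fmap w - Pw w n) <= 2 * (1/2)^n.
Proof.
  assert (Hs : forall eps, 0 < eps -> exists N, (1/2)^N < eps) by apply half_pow_small.
  destruct (lim_bound (fun n => fst (Pw w n)) (fun n => (1/2)^n)) as [_ B1]; auto.
  { intros a b Hab. eapply Rle_trans; [|apply (Pw_cauchy w a b Hab)].
    replace (fst (Pw w b) - fst (Pw w a)) with (fst (Pw w b - Pw w a)%C) by reflexivity. apply Cmod_fst. }
  destruct (lim_bound (fun n => snd (Pw w n)) (fun n => (1/2)^n)) as [_ B2]; auto.
  { intros a b Hab. eapply Rle_trans; [|apply (Pw_cauchy w a b Hab)].
    replace (snd (Pw w b) - snd (Pw w a)) with (snd (Pw w b - Pw w a)%C) by reflexivity. apply Cmod_snd. }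
  eapply Rle_trans. apply Cmod_2Rmax. unfold fmap. simpl.
  specialize (B1 n). specialize (B2 n).
  assert (Rmax (Rabs (real (Lim_seq (fun n0 : nat => fst (Pw w n0))) - fst (Pw w n)))
      (Rabs (real (Lim_seq (fun n0 : nat => snd (Pw w n0))) - snd (Pw w n))) <= (1/2)^n)
    by (apply Rmax_lub; auto).
  assert (sqrt 2 <= 2).
  { rewrite <- (sqrt_pow2 2) at 2 by lra. apply sqrt_le_1; lra. }
  pose proof (pow_le (1/2) n ltac:(lra)).
  assert (0 <= Rmax (Rabs (real (Lim_seq (fun n0 : nat => fst (Pw w n0))) - fst (Pw w n)))
      (Rabs (real (Lim_seq (fun n0 : nat => snd (Pw w n0))) - snd (Pw w n)))).
  { eapply Rle_trans. apply Rabs_pos. apply Rmax_l. }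
  pose proof (sqrt_pos 2). unfold Cminus, Cplus, Copp. simpl.
  replace (real (Lim_seq (fun n0 : nat => fst (Pw w n0))) + - fst (Pw w n))
    with (real (Lim_seq (fun n0 : nat => fst (Pw w n0))) - fst (Pw w n)) by ring.
  replace (real (Lim_seq (fun n0 : nat => snd (Pw w n0))) + - snd (Pw w n))
    with (real (Lim_seq (fun n0 : nat => snd (Pw w n0))) - snd (Pw w n)) by ring.
  nra.
Qed.

Lemma Cmod_small z K : (forall n, Cmod z <= K * (1/2)^n) -> z = 0%C.
Proof.
  intros H. apply Cmod_eq_0. apply Rle_antisym.
  - apply le_of_half_pow with K. intros n. rewrite Rplus_0_l. auto.
  - apply Cmod_ge_0.
Qed.

Lemma fmap_unique w z K : (forall n, Cmod (z - Pw w n) <= K * (1/2)^n) -> z = fmap w.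
Proof.
  intros H. assert (E : (z - fmap w)%C = 0%C).
  { apply Cmod_small with (K + 2). intros n. eapply Rle_trans. apply (Cmod_tri3 z (Pw w n) (fmap w)).
    rewrite (Cmod_sym (Pw w n)). pose proof (H n). pose proof (fmap_approx w n). lra. }
  replace z with ((z - fmap w) + fmap w)%C by ring. rewrite E. ring.
Qed.

Lemma fmap_ext x y : (forall k, x k = y k) -> fmap x = fmap y.
Proof.
  intros H. unfold fmap, Pw. f_equal; f_equal; apply Lim_seq_ext; intros n; rewrite (pref_ext x y); auto.
Qed.

Lemma lin_closed (l : C -> R) c z : (forall p q, Rabs (l p - l q) <= c * Cmod (p - q)) ->
  (forall n, exists p, 0 <= l p /\ Cmod (z - p) <= 2 * (1/2)^n) -> 0 <= l z.
Proof.
  intros Hl H. apply le_of_half_pow with (2 * Rabs c). intros n. destruct (H n) as [p [Hp Hd]].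
  specialize (Hl z p). apply Rabs_le_between in Hl. destruct Hl as [Hl _].
  pose proof (Rle_abs c). pose proof (Cmod_ge_0 (z - p)%C). pose proof (Rabs_pos c).
  assert (c * Cmod (z - p) <= Rabs c * (2 * (1/2)^n)) by nra. lra.
Qed.

Lemma fmap_inD w : iword m w -> inD m (fmap w).
Proof.
  intros Hw.
  assert (Ap : forall n, exists p, inD m p /\ Cmod (fmap w - p) <= 2 * (1/2)^n).
  { intros n. exists (Pw w n). split. apply Psi_inD. apply fword_pref; auto. apply (inD_0 m Hm).
    apply fmap_approx. }
  pose proof (tu_pos m Hm).
  unfold inD. split; [|split].
  - apply (lin_closed (fun z => snd z) 1). intros p q. rewrite Rmult_1_l. apply (Cmod_snd (p - q)%C).
    intros n. destruct (Ap n) as [p [[H1 _] H2]]. eauto.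
  - assert (0 <= tu m * fst (fmap w) - snd (fmap w)); [|lra].
    apply (lin_closed (fun z => tu m * fst z - snd z) (tu m + 1)).
    + intros p q. replace (tu m * fst p - snd p - (tu m * fst q - snd q))
        with (tu m * fst (p - q)%C - snd (p - q)%C) by (simpl; ring).
      eapply Rle_trans. apply Rabs_triang. rewrite Rabs_Ropp, Rabs_mult, Rabs_right by lra.
      pose proof (Cmod_fst (p - q)%C). pose proof (Cmod_snd (p - q)%C). nra.
    + intros n. destruct (Ap n) as [p [[_ [H1 _]] H2]]. exists p. split; auto. lra.
  - assert (0 <= tu m * (1 - fst (fmap w)) - snd (fmap w)); [|lra].
    apply (lin_closed (fun z => tu m * (1 - fst z) - snd z) (tu m + 1)).
    + intros p q. replace (tu m * (1 - fst p) - snd p - (tu m * (1 - fst q) - snd q))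
        with (- (tu m * fst (p - q)%C) - snd (p - q)%C) by (simpl; ring).
      eapply Rle_trans. apply Rabs_triang. rewrite !Rabs_Ropp, Rabs_mult, Rabs_right by lra.
      pose proof (Cmod_fst (p - q)%C). pose proof (Cmod_snd (p - q)%C). nra.
    + intros n. destruct (Ap n) as [p [[_ [_ H1]] H2]]. exists p. split; auto. lra.
Qed.

Lemma fmap_cons k w : letter m k -> iword m w -> fmap (scons k w) = psi m k (fmap w).
Proof.
  intros Hk Hw. symmetry. apply fmap_unique with 2. intros [|n].
  - unfold Pw. simpl. replace (psi m k (fmap w) - 0)%C with (psi m k (fmap w)) by ring.
    pose proof (inD_Cmod m Hm _ (psi_inD m Hm k _ Hk (fmap_inD w Hw))). lra.
  - unfold Pw. rewrite pref_scons. simpl. rewrite (psi_dist m Hm).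
    pose proof (fmap_approx w n). unfold Pw in H. pose proof (aw_le_half m Hm k). pose proof (aw_pos m Hm k).
    pose proof (Cmod_ge_0 (fmap w - Psi (pref w n) 0)%C).
    apply Rle_trans with ((1/2) * (2 * (1/2)^n)). apply Rmult_le_compat; lra. lra.
Qed.

Lemma fmap_prepend v w : fword m v -> iword m w -> fmap (prepend v w) = Psi v (fmap w).
Proof.
  intros Hv Hw. induction Hv as [|k v Hk Hv IH]; simpl. reflexivity.
  rewrite fmap_cons; auto. rewrite IH. reflexivity. apply iword_prepend; auto.
Qed.

Lemma fword_of_begins x v : iword m x -> ibegins x v -> fword m v.
Proof. intros Hx Hv. unfold ibegins in Hv. rewrite <- Hv. apply fword_pref; auto. Qed.

Lemma fmap_begins x v : iword m x -> ibegins x v -> fmap x = Psi v (fmap (shiftn (length v) x)).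
Proof.
  intros Hx Hv. rewrite (fmap_ext x (prepend v (shiftn (length v) x))).
  apply fmap_prepend. eapply fword_of_begins; eauto. apply iword_shiftn; auto.
  apply ibegins_decomp; auto.
Qed.

Lemma fmap_cyl x v : iword m x -> ibegins x v -> Cmod (fmap x - Psi v 0%C) <= Dl v.
Proof.
  intros Hx Hv. rewrite (fmap_begins x v Hx Hv), Psi_dist.
  replace (fmap (shiftn (length v) x) - 0)%C with (fmap (shiftn (length v) x)) by ring.
  pose proof (inD_Cmod m Hm _ (fmap_inD _ (iword_shiftn _ (length v) _ Hx))).
  pose proof (Dl_nonneg v). nra.
Qed.

Lemma fmap_cst e : (e = 1 \/ e = 2)%nat -> fmap (cst e) = fixp e.
Proof.
  intros He. assert (Hl : letter m e) by (unfold letter; lia).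
  assert (E : fmap (cst e) = psi m e (fmap (cst e))).
  { rewrite <- fmap_cons; auto. apply fmap_ext. intros [|k]; reflexivity. apply iword_cst; auto. }
  assert (Z : (fmap (cst e) - fixp e)%C = 0%C).
  { apply Cmod_small with 2. intros n. induction n as [|n IH].
    - simpl. eapply Rle_trans. apply Cmod_triangle. rewrite Cmod_opp.
      pose proof (inD_Cmod m Hm _ (fmap_inD _ (iword_cst m e Hl))).
      assert (Cmod (fixp e) <= 1).
      { unfold fixp. destruct (Nat.eqb e 2). replace ((1,0)) with (RtoC 1) by reflexivity.
        rewrite Cmod_R, Rabs_R1; lra. rewrite Cmod_0; lra. }
      lra.
    - rewrite E at 1. rewrite <- (fixp_fix m Hm e He) at 1. rewrite (psi_dist m Hm).
      rewrite aw_12 by lia. simpl. lra. }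
  replace (fmap (cst e)) with ((fmap (cst e) - fixp e) + fixp e)%C by ring. rewrite Z. ring.
Qed.

Lemma fmap_basept v i : fword m v -> letter m i ->
  fmap (prepend v (scons i (cst (ebase i)))) = Psi v cpt.
Proof.
  intros Hv Hi. pose proof (ebase_12 i).
  rewrite fmap_prepend; auto. rewrite fmap_cons; auto. rewrite fmap_cst; auto.
  rewrite psi_center; auto. apply iword_cst. unfold letter; lia.
  apply iword_scons; auto. apply iword_cst. unfold letter; lia.
Qed.

End F.

Lemma half_pow_mono n k : (n <= k)%nat -> (1/2)^k <= (1/2)^n.
Proof.
  intros H. replace k with (n + (k - n))%nat by lia. rewrite pow_add.
  pose proof (pow_le (1/2) n ltac:(lra)). generalize (k - n)%nat. intros j.
  assert ((1/2)^j <= 1). { induction j; simpl. lra. pose proof (pow_le (1/2) j ltac:(lra)). nra. }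
  pose proof (pow_le (1/2) j ltac:(lra)). nra.
Qed.

Lemma pb_begins r c e k : ibegins (prepend r (scons c (cst e))) (r ++ c :: repeat e k).
Proof.
  unfold ibegins. rewrite length_app. simpl. rewrite repeat_length. apply pref_bw.
Qed.

Section Rho.
Variable m : nat.
Hypothesis Hm : (2 <= m)%nat.

Notation f := (fmap m).
Notation Dl := (Dl m).

Lemma ebase_ge2 i : (2 <= i)%nat -> ebase i = 1%nat.
Proof. intros. unfold ebase. destruct (Nat.eqb_spec i 1). lia. reflexivity. Qed.

Lemma ident_pt r i : fword m r -> (2 <= i <= m)%nat ->
  f (prepend r (scons 1 (cst 2))) = f (prepend r (scons i (cst 1))).
Proof.
  intros Hr Hi.
  pose proof (fmap_basept m Hm r 1 Hr ltac:(unfold letter; lia)) as E1. change (ebase 1) with 2%nat in E1.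
  pose proof (fmap_basept m Hm r i Hr ltac:(unfold letter; lia)) as E2. rewrite ebase_ge2 in E2 by lia.
  congruence.
Qed.

Lemma half_close u1 u2 w : wedge_half m u1 u2 w -> forall eps, 0 < eps ->
  exists x1 x2, iword m x1 /\ iword m x2 /\ ibegins x1 u1 /\ ibegins x2 u2 /\
     Cmod (f x1 - f x2) <= eps.
Proof.
  intros [Hw [H1 H2]] eps Heps.
  destruct (half_pow_small (eps / 4)) as [N HN]. lra.
  set (n := (S (N + Nat.max (length u1) (length u2)))).
  destruct (H2 n ltac:(unfold n; lia)) as [u [Lu [Fu [Bu Eu]]]].
  exists w, (prepend u (cst 1)).
  assert (Hx2 : iword m (prepend u (cst 1))) by (apply iword_prepend; auto; apply iword_cst; unfold letter; lia).
  split; [auto|split; [auto|split; [auto|split]]].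
  - unfold ibegins. rewrite pref_prepend_le by (unfold n in Lu; lia). exact Bu.
  - assert (Hpn : (1/2)^n <= eps/4).
    { apply Rle_trans with ((1/2)^N). apply half_pow_mono. unfold n; lia. lra. }
    destruct (Edge_inv m n _ _ Eu) as [r [i [k [Hr [Hi Hst]]]]].
    set (zs := prepend r (scons 1 (cst 2))). set (zt := prepend r (scons i (cst 1))).
    assert (Hzs : iword m zs) by (apply iword_prepend; auto; apply iword_scons; [unfold letter; lia|apply iword_cst; unfold letter; lia]).
    assert (Hzt : iword m zt) by (apply iword_prepend; auto; apply iword_scons; [unfold letter; lia|apply iword_cst; unfold letter; lia]).
    assert (Bs : ibegins zs (r ++ 1%nat :: repeat 2%nat k)) by apply pb_begins.
    assert (Bt : ibegins zt (r ++ i :: repeat 1%nat k)) by apply pb_begins.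
    assert (Ezz : f zs = f zt) by (apply ident_pt; auto).
    assert (Hu : ibegins (prepend u (cst 1)) u) by apply ibegins_prepend.
    assert (Hwn : ibegins w (pref w n)) by apply ibegins_pref.
    assert (Dn : forall s, length s = n -> Dl s <= eps / 4).
    { intros s Hs. eapply Rle_trans. apply Dl_le; auto. rewrite Hs. auto. }
    assert (Ls : length (pref w n) = n) by apply pref_length.
    assert (Gen : forall s t zs zt, iword m zs -> iword m zt -> f zs = f zt -> ibegins zs s -> ibegins zt t ->
               ibegins w s -> ibegins (prepend u (cst 1)) t -> length s = n -> length t = n ->
               Cmod (f w - f (prepend u (cst 1))) <= eps).
    { intros s t a b Ha Hb Eab Ba Bb Bw Bu' Ls' Lt'.
      pose proof (fmap_cyl m Hm w s Hw Bw) as C1. pose proof (fmap_cyl m Hm a s Ha Ba) as C2.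
      pose proof (fmap_cyl m Hm b t Hb Bb) as C3. pose proof (fmap_cyl m Hm _ t Hx2 Bu') as C4.
      pose proof (Dn s Ls') as D1. pose proof (Dn t Lt') as D2.
      pose proof (Cmod_tri3 (f w) (Psi m s 0) (f a)) as T1. rewrite (Cmod_sym (Psi m s 0)) in T1.
      pose proof (Cmod_tri3 (f b) (Psi m t 0) (f (prepend u (cst 1)))) as T2.
      rewrite (Cmod_sym (Psi m t 0) (f (prepend u (cst 1)))) in T2.
      pose proof (Cmod_tri3 (f w) (f a) (f (prepend u (cst 1)))) as T3.
      pose proof (Cmod_tri3 (f a) (f b) (f (prepend u (cst 1)))) as T4.
      assert (Z : Cmod (f a - f b) = 0) by (rewrite Eab; replace (f b - f b)%C with (RtoC 0) by ring; apply Cmod_0).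
      lra. }
    destruct Hst as [[Es Et]|[Es Et]].
    + apply (Gen (pref w n) u zs zt); auto; rewrite ?Es, ?Et; auto.
    + apply (Gen (pref w n) u zt zs); auto; rewrite ?Es, ?Et; auto.
Qed.

Lemma wedge_close u1 u2 : wedge_nonempty m u1 u2 -> forall eps, 0 < eps ->
  exists x1 x2, iword m x1 /\ iword m x2 /\ ibegins x1 u1 /\ ibegins x2 u2 /\
     Cmod (f x1 - f x2) <= eps.
Proof.
  intros [w [H|H]] eps Heps.
  - eapply half_close; eauto.
  - destruct (half_close _ _ _ H eps Heps) as [x1 [x2 [A [B [C [D E]]]]]].
    exists x2, x1. split; [auto|split; [auto|split; [auto|split; [auto|]]]]. rewrite Cmod_sym. auto.
Qed.

Lemma chain_bound vs : vs <> [] -> consecutive_wedges m vs ->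
  forall p q, iword m p -> iword m q -> ibegins p (hd [] vs) -> ibegins q (last vs []) ->
  forall eps, 0 < eps ->
  Cmod (f p - f q) <= 2 * chain_sum (aw m) vs + INR (length vs) * eps.
Proof.
  induction vs as [|v rest IH]; intros Hne Hc p q Hp Hq Bp Bq eps Heps. congruence.
  destruct rest as [|v2 rest'].
  - simpl in *. pose proof (fmap_cyl m Hm p v Hp Bp). pose proof (fmap_cyl m Hm q v Hq Bq).
    pose proof (Cmod_tri3 (f p) (Psi m v 0) (f q)). rewrite (Cmod_sym (Psi m v 0)) in H1.
    unfold Submission.Dl in *. lra.
  - destruct Hc as [Hw Hc]. destruct (wedge_close v v2 Hw eps Heps) as [x1 [x2 [H1 [H2 [B1 [B2 E]]]]]].
    assert (IH' := IH ltac:(discriminate) Hc x2 q H2 Hq B2 Bq eps Heps).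
    simpl hd in Bp. pose proof (fmap_cyl m Hm p v Hp Bp). pose proof (fmap_cyl m Hm x1 v H1 B1).
    pose proof (Cmod_tri3 (f p) (Psi m v 0) (f x1)). rewrite (Cmod_sym (Psi m v 0)) in H3.
    pose proof (Cmod_tri3 (f p) (f x1) (f q)). pose proof (Cmod_tri3 (f x1) (f x2) (f q)).
    change (chain_sum (aw m) (v :: v2 :: rest')) with (Defs.Delta (aw m) v + chain_sum (aw m) (v2 :: rest')).
    change (length (v :: v2 :: rest')) with (S (length (v2 :: rest'))). rewrite S_INR.
    unfold Submission.Dl in *. lra.
Qed.

Lemma chain_sum_nonneg vs : 0 <= chain_sum (aw m) vs.
Proof.
  induction vs as [|v vs IH]; simpl. lra. pose proof (Dl_nonneg m Hm v). unfold Submission.Dl in H. lra.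
Qed.

Lemma rho_props w u : (forall vs, chain m w u vs -> rho m (aw m) w u <= chain_sum (aw m) vs) /\
  (forall b, (forall vs, chain m w u vs -> b <= chain_sum (aw m) vs) -> b <= rho m (aw m) w u).
Proof.
  unfold rho. pose proof (Glb_Rbar_correct (chain_sums m (aw m) w u)) as [Hlb Hglb].
  assert (Hc1 : chain_sums m (aw m) w u 1).
  { exists [[]]. split. split; [discriminate|split; [repeat constructor|split; [reflexivity|split; [reflexivity|exact I]]]].
    simpl. ring. }
  assert (L0 : is_lb_Rbar (chain_sums m (aw m) w u) 0).
  { intros x [vs [_ ->]]. simpl. apply chain_sum_nonneg. }
  pose proof (Hlb 1 Hc1) as U. pose proof (Hglb 0 L0) as Lo.
  destruct (Glb_Rbar (chain_sums m (aw m) w u)) as [g| |]; simpl in U, Lo; try contradiction.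
  simpl. split.
  - intros vs Hvs. apply (Hlb (chain_sum (aw m) vs)). exists vs. auto.
  - intros b Hb. apply (Hglb (Finite b)). intros x [vs [Hvs ->]]. simpl. auto.
Qed.

Lemma dist_le_rho w u : iword m w -> iword m u -> Cmod (f w - f u) <= 2 * rho m (aw m) w u.
Proof.
  intros Hw Hu. destruct (rho_props w u) as [_ Hlb].
  assert (Cmod (f w - f u) / 2 <= rho m (aw m) w u); [|lra].
  apply Hlb. intros vs [Hne [Hf [Bw [Bu Hc]]]].
  assert (Cmod (f w - f u) <= 2 * chain_sum (aw m) vs); [|lra].
  apply le_of_half_pow with (INR (length vs)). intros n.
  apply chain_bound; auto. apply pow_lt. lra.
Qed.

Lemma rho_single w u v : fword m v -> ibegins w v -> ibegins u v -> rho m (aw m) w u <= Dl v.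
Proof.
  intros Hv Bw Bu. destruct (rho_props w u) as [Hub _]. 
  replace (Dl v) with (chain_sum (aw m) [v]) by (simpl; unfold Submission.Dl; ring).
  apply Hub. split; [discriminate|split; [repeat constructor; auto|split; [auto|split; [auto|exact I]]]].
Qed.

Lemma rho_nonneg w u : 0 <= rho m (aw m) w u.
Proof.
  destruct (rho_props w u) as [_ Hlb]. apply Hlb. intros. apply chain_sum_nonneg.
Qed.

Lemma rho_eq w u : iword m w -> (forall k, w k = u k) -> rho m (aw m) w u = 0.
Proof.
  intros Hw H. apply Rle_antisym; [|apply rho_nonneg].
  apply le_of_half_pow with 1. intros n. rewrite Rplus_0_l, Rmult_1_l.
  eapply Rle_trans. apply (rho_single w u (pref w n)). apply fword_pref; auto.
  apply ibegins_pref. unfold ibegins. rewrite pref_length. apply pref_ext. intros; symmetry; auto.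
  eapply Rle_trans. apply Dl_le; auto. rewrite pref_length. lra.
Qed.

Definition bw (v : list nat) (i : nat) := prepend v (scons i (cst (ebase i))).
Definition YwA (v : list nat) := prepend v (scons 1 (cst 2)).

Lemma iword_bw v i : fword m v -> letter m i -> iword m (bw v i).
Proof.
  intros. unfold bw. apply iword_prepend; auto. apply iword_scons; auto. apply iword_cst.
  pose proof (ebase_12 i). unfold letter; lia.
Qed.

Lemma bw_begins v i k : ibegins (bw v i) (v ++ i :: repeat (ebase i) k).
Proof.
  apply pb_begins.
Qed.

Lemma wedge_bw_Y v i N : fword m v -> letter m i -> (length v < N)%nat ->
  wedge_nonempty m (pref (bw v i) N) (pref (YwA v) N).
Proof.
  intros Hv Hi HN. destruct (Nat.eq_dec i 1) as [->|Ni].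
  - apply wedge_common with (YwA v); auto. apply iword_bw; auto. apply ibegins_pref. apply ibegins_pref.
  - unfold bw, YwA. rewrite ebase_ge2 by (unfold letter in Hi; lia). apply wedge_ident; auto.
    unfold letter in Hi; lia.
Qed.

Lemma rho_pair x y v i j k l : iword m x -> iword m y -> fword m v -> letter m i -> letter m j ->
  ibegins x (v ++ i :: repeat (ebase i) k) -> ibegins y (v ++ j :: repeat (ebase j) l) ->
  rho m (aw m) x y <= Dl (v ++ i :: repeat (ebase i) k) + Dl (v ++ j :: repeat (ebase j) l).
Proof.
  intros Hx Hy Hv Hi Hj Bx By. destruct (rho_props x y) as [Hub _].
  set (V1 := v ++ i :: repeat (ebase i) k). set (V2 := v ++ j :: repeat (ebase j) l).
  apply le_of_half_pow with 3. intros n.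
  set (N := S (n + length v)).
  set (Zx := pref (bw v i) N). set (Zy := pref (bw v j) N). set (Yc := pref (YwA v) N).
  assert (HY : iword m (YwA v)).
  { unfold YwA. apply iword_prepend; auto. apply iword_scons. unfold letter; lia. apply iword_cst; unfold letter; lia. }
  assert (Fi : fword m V1) by (apply (fword_of_begins m x); auto).
  assert (Fj : fword m V2) by (apply (fword_of_begins m y); auto).
  assert (DN : forall s, length s = N -> Dl s <= (1/2)^n).
  { intros s Hs. eapply Rle_trans. apply Dl_le; auto. rewrite Hs. apply half_pow_mono. unfold N; lia. }
  eapply Rle_trans. apply (Hub [V1; Zx; Yc; Zy; V2]).
  - split; [discriminate|split; [|split; [exact Bx|split; [exact By|]]]].
    + assert (Hzx : fword m Zx) by (apply fword_pref; apply iword_bw; auto).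
      assert (Hzy : fword m Zy) by (apply fword_pref; apply iword_bw; auto).
      assert (Hyc : fword m Yc) by (apply fword_pref; auto).
      apply Forall_cons; [auto|]. apply Forall_cons; [auto|]. apply Forall_cons; [auto|].
      apply Forall_cons; [auto|]. apply Forall_cons; [auto|]. apply Forall_nil.
    + simpl. split; [|split; [|split; [|split; [|exact I]]]].
      * apply wedge_common with (bw v i); auto. apply iword_bw; auto. apply bw_begins. apply ibegins_pref.
      * apply wedge_bw_Y; auto. unfold N; lia.
      * apply wedge_sym. apply wedge_bw_Y; auto. unfold N; lia.
      * apply wedge_common with (bw v j); auto. apply iword_bw; auto. apply ibegins_pref. apply bw_begins.
  - change (chain_sum (aw m) [V1;Zx;Yc;Zy;V2]) with (Dl V1 + (Dl Zx + (Dl Yc + (Dl Zy + (Dl V2 + 0))))).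
    pose proof (DN Zx (pref_length _ _)). pose proof (DN Zy (pref_length _ _)). pose proof (DN Yc (pref_length _ _)).
    lra.
Qed.

End Rho.

Lemma pref_ext_lt x y n : (forall k, (k < n)%nat -> x k = y k) -> pref x n = pref y n.
Proof.
  intros H. unfold pref. apply map_ext_in. intros a Ha. apply in_seq in Ha. apply H. lia.
Qed.

Lemma pref_add x n j : pref x (n + j) = pref x n ++ pref (shiftn n x) j.
Proof.
  induction j as [|j IH]. rewrite Nat.add_0_r. simpl. rewrite app_nil_r. reflexivity.
  rewrite Nat.add_succ_r, !pref_Sr, IH, app_assoc. reflexivity.
Qed.

Lemma ibegins_split x n u : ibegins (shiftn n x) u -> ibegins x (pref x n ++ u).
Proof.
  unfold ibegins. intros H. rewrite length_app, pref_length, pref_add, H. reflexivity.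
Qed.

Lemma shiftn_S x n k : shiftn n x k = scons (x n) (shiftn (S n) x) k.
Proof. unfold shiftn, scons. destruct k. f_equal; lia. f_equal; lia. Qed.

Section KL.
Variable m : nat.
Hypothesis Hm : (2 <= m)%nat.
Notation f := (fmap m).
Notation Dl := (Dl m).

Lemma Psi_repeat_fix e k : (e = 1 \/ e = 2)%nat -> Psi m (repeat e k) (fixp e) = fixp e.
Proof.
  intros He. induction k as [|k IH]; simpl. reflexivity. rewrite IH. apply fixp_fix; auto.
Qed.

Lemma f_shiftn x n : iword m x -> f (shiftn n x) = psi m (x n) (f (shiftn (S n) x)).
Proof.
  intros Hx. rewrite (fmap_ext m (shiftn n x) (scons (x n) (shiftn (S n) x))).
  apply fmap_cons; auto. apply iword_shiftn; auto. apply shiftn_S.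
Qed.

Lemma base_dist e z : (e = 1 \/ e = 2)%nat -> iword m z -> forall eps, 0 < eps ->
  exists k, ibegins z (repeat e k) /\ (1/2)^k <= 4 * Cmod (f z - fixp e) + eps.
Proof.
  intros He Hz eps Heps.
  destruct (classic (exists n, z n <> e)) as [[n Hn]|Hno].
  - destruct (exists_min (fun n => z n <> e)) with n as [n0 [H0 Hmin]]; auto.
    { intros k. destruct (Nat.eq_dec (z k) e); auto. }
    assert (Bz : ibegins z (repeat e n0)).
    { unfold ibegins. rewrite repeat_length, <- pref_cst. apply pref_ext_lt. intros k Hk.
      unfold cst. destruct (Nat.eq_dec (z k) e); auto. exfalso; apply (Hmin k); auto. }
    exists n0. split; auto.
    rewrite (fmap_begins m Hm z _ Hz Bz). rewrite repeat_length.
    rewrite <- (Psi_repeat_fix e n0 He). rewrite (Psi_dist m Hm), (Dl_repeat m Hm) by lia.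
    rewrite f_shiftn by auto.
    pose proof (G2 m Hm e (z n0) (f (shiftn (S n0) z)) He (Hz n0) H0
                 (fmap_inD m Hm _ (iword_shiftn _ _ _ Hz))).
    pose proof (pow_lt (1/2) n0 ltac:(lra)). nra.
  - destruct (half_pow_small eps Heps) as [k Hk]. exists k. split.
    + unfold ibegins. rewrite repeat_length, <- pref_cst. apply pref_ext. intros j. unfold cst.
      destruct (Nat.eq_dec (z j) e); auto. exfalso. apply Hno. eauto.
    + pose proof (Cmod_ge_0 (f z - fixp e)%C). lra.
Qed.

Definition Ck := 4 / kp m.

Lemma Ck_pos : 0 < Ck.
Proof. unfold Ck. apply Rdiv_lt_0_compat. lra. apply kp_pos; auto. Qed.

Lemma key_lemma x y : iword m x -> iword m y -> (exists n, x n <> y n) -> forall eps, 0 < eps ->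
  exists v i j k l, fword m v /\ letter m i /\ letter m j /\ i <> j /\
    ibegins x (v ++ i :: repeat (ebase i) k) /\ ibegins y (v ++ j :: repeat (ebase j) l) /\
    Dl (v ++ i :: repeat (ebase i) k) + Dl (v ++ j :: repeat (ebase j) l) <= Ck * Cmod (f x - f y) + eps.
Proof.
  intros Hx Hy [n Hn] eps Heps.
  destruct (exists_min (fun n => x n <> y n)) with n as [n0 [H0 Hmin]]; auto.
  { intros k. destruct (Nat.eq_dec (x k) (y k)); auto. }
  set (v := pref x n0). set (i := x n0). set (j := y n0).
  assert (Ev : pref y n0 = v).
  { unfold v. apply pref_ext_lt. intros k Hk. destruct (Nat.eq_dec (x k) (y k)); auto.
    exfalso; apply (Hmin k); auto. }
  set (x' := shiftn (S n0) x). set (y' := shiftn (S n0) y).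
  assert (Hx' : iword m x') by (apply iword_shiftn; auto).
  assert (Hy' : iword m y') by (apply iword_shiftn; auto).
  destruct (base_dist (ebase i) x' (ebase_12 i) Hx' eps Heps) as [k [Bk Hk]].
  destruct (base_dist (ebase j) y' (ebase_12 j) Hy' eps Heps) as [l [Bl Hl]].
  exists v, i, j, k, l.
  assert (Fv : fword m v) by (apply fword_pref; auto).
  assert (Bx : ibegins x (v ++ i :: repeat (ebase i) k)).
  { unfold v. apply ibegins_split. unfold ibegins. simpl. rewrite pref_S.
    f_equal. unfold shiftn, i. f_equal; lia.
    unfold ibegins in Bk. rewrite <- Bk at 2. apply pref_ext. intros a. unfold x', shift, shiftn. f_equal; lia. }
  assert (By : ibegins y (v ++ j :: repeat (ebase j) l)).
  { rewrite <- Ev. apply ibegins_split. unfold ibegins. simpl. rewrite pref_S.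
    f_equal. unfold shiftn, j. f_equal; lia.
    unfold ibegins in Bl. rewrite <- Bl at 2. apply pref_ext. intros a. unfold y', shift, shiftn. f_equal; lia. }
  split; [auto|split; [apply Hx|split; [apply Hy|split; [exact H0|split; [auto|split; [auto|]]]]]].
  assert (Ex : f x = Psi m v (psi m i (f x'))).
  { rewrite (fmap_begins m Hm x v Hx) by apply ibegins_pref. unfold v at 2. rewrite pref_length.
    rewrite f_shiftn by auto. reflexivity. }
  assert (Ey : f y = Psi m v (psi m j (f y'))).
  { rewrite (fmap_begins m Hm y v Hy) by (rewrite <- Ev; apply ibegins_pref). unfold v at 2. rewrite pref_length.
    rewrite f_shiftn by auto. reflexivity. }
  assert (Dxy : Cmod (f x - f y) = Dl v * Cmod (psi m i (f x') - psi m j (f y'))).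
  { rewrite Ex, Ey. apply (Psi_dist m Hm). }
  pose proof (G3 m Hm i j (f x') (f y') (Hx n0) (Hy n0) H0 (fmap_inD m Hm _ Hx') (fmap_inD m Hm _ Hy')) as G.
  rewrite (psi_minus_c m Hm i) in G by apply Hx. rewrite (psi_minus_c m Hm j) in G by apply Hy.
  rewrite !Dl_app, !Dl_cons, !Dl_repeat by (pose proof (ebase_12 i); pose proof (ebase_12 j); lia).
  pose proof (kp_pos m Hm). pose proof (Dl_nonneg m Hm v). pose proof (Dl_le1 m Hm v).
  pose proof (aw_pos m Hm i). pose proof (aw_pos m Hm j). pose proof (aw_le_half m Hm i). pose proof (aw_le_half m Hm j).
  set (hx := Cmod (f x' - fixp (ebase i))) in *. set (hy := Cmod (f y' - fixp (ebase j))) in *.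
  set (D := Cmod (psi m i (f x') - psi m j (f y'))) in *.
  assert (Hq : aw m i * hx + aw m j * hy <= D / kp m).
  { apply Rmult_le_reg_r with (kp m); auto. unfold Rdiv. rewrite Rmult_assoc, Rinv_l by lra. lra. }
  assert (S1 : aw m i * (1/2)^k <= aw m i * (4 * hx + eps)) by (apply Rmult_le_compat_l; lra).
  assert (S2 : aw m j * (1/2)^l <= aw m j * (4 * hy + eps)) by (apply Rmult_le_compat_l; lra).
  assert (S3 : Dl v * (aw m i * (1/2)^k) + Dl v * (aw m j * (1/2)^l) <=
               Dl v * (4 * (aw m i * hx + aw m j * hy)) + Dl v * (aw m i + aw m j) * eps) by nra.
  assert (S4 : Dl v * (4 * (aw m i * hx + aw m j * hy)) <= Dl v * (4 * (D / kp m))) by nra.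
  assert (S5 : Dl v * (aw m i + aw m j) * eps <= eps).
  { assert (aw m i + aw m j <= 1) by lra. assert (Dl v * (aw m i + aw m j) <= 1) by nra. nra. }
  rewrite Dxy. unfold Ck.
  replace (4 / kp m * (Dl v * D)) with (Dl v * (4 * (D / kp m))) by (field; lra).
  lra.
Qed.

Lemma rho_le_dist x y : iword m x -> iword m y -> rho m (aw m) x y <= Ck * Cmod (f x - f y).
Proof.
  intros Hx Hy. destruct (classic (exists n, x n <> y n)) as [Hd|Hno].
  - apply le_of_half_pow with 1. intros n. rewrite Rmult_1_l.
    destruct (key_lemma x y Hx Hy Hd ((1/2)^n) ltac:(apply pow_lt; lra))
      as [v [i [j [k [l [Fv [Hi [Hj [Hij [Bx [By Hs]]]]]]]]]]].
    eapply Rle_trans. apply (rho_pair m Hm x y v i j k l); auto. exact Hs.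
  - rewrite (rho_eq m Hm x y Hx). pose proof Ck_pos. pose proof (Cmod_ge_0 (f x - f y)%C). nra.
    intros k. destruct (Nat.eq_dec (x k) (y k)); auto. exfalso. apply Hno. eauto.
Qed.

End KL.

Inductive md := MQ | MP | MB.

Definition dstep (s : md * (nat -> nat) * R) : nat * (md * (nat -> nat) * R) :=
  let '(mo, x, t) := s in
  match mo with
  | MB => if Rle_dec t (1/2) then (1%nat, (MB, x, 2*t)) else (2%nat, (MB, x, 2*t-1))
  | MQ => if Nat.eqb (x O) 1 then (1%nat, (MQ, shift x, t))
          else if Rle_dec t (1/2) then (1%nat, (MB, x, 2*t)) else (x O, (MQ, shift x, 2*t-1))
  | MP => if Nat.eqb (x O) 2 then (2%nat, (MP, shift x, t))
          else if Rle_dec t (1/2) then (2%nat, (MB, x, 1 - 2*t))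
          else if Nat.eqb (x O) 1 then (1%nat, (MP, shift x, 2*t-1)) else (x O, (MQ, shift x, 2*t-1))
  end.

Fixpoint Yw (s : md * (nat -> nat) * R) (n : nat) : nat :=
  match n with O => fst (dstep s) | S n' => Yw (snd (dstep s)) n' end.

Definition swd (s : md * (nat -> nat) * R) : nat -> nat := snd (fst s).

Lemma Yw_scons s k : Yw s k = scons (fst (dstep s)) (Yw (snd (dstep s))) k.
Proof. destruct k; reflexivity. Qed.

Section Paths.
Variable m : nat.
Hypothesis Hm : (2 <= m)%nat.
Notation f := (fmap m).

Lemma dstep_ok s : iword m (swd s) -> letter m (fst (dstep s)) /\ iword m (swd (snd (dstep s))).
Proof.
  destruct s as [[mo x] t]. unfold swd. simpl. intros Hx.
  assert (L1 : letter m 1) by (unfold letter; lia). assert (L2 : letter m 2) by (unfold letter; lia).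
  pose proof (iword_shift m x Hx).
  destruct mo; simpl.
  - destruct (Nat.eqb (x O) 1); simpl; auto. destruct (Rle_dec t (1/2)); simpl; auto.
  - destruct (Nat.eqb (x O) 2); simpl; auto. destruct (Rle_dec t (1/2)); simpl; auto.
    destruct (Nat.eqb (x O) 1); simpl; auto.
  - destruct (Rle_dec t (1/2)); simpl; auto.
Qed.

Lemma Yw_iword s : iword m (swd s) -> iword m (Yw s).
Proof.
  intros H n. revert s H. induction n as [|n IH]; intros s H.
  - exact (proj1 (dstep_ok s H)).
  - change (letter m (Yw (snd (dstep s)) n)). apply IH. exact (proj2 (dstep_ok s H)).
Qed.

Lemma fY s : iword m (swd s) -> f (Yw s) = psi m (fst (dstep s)) (f (Yw (snd (dstep s)))).
Proof.
  intros H. rewrite (fmap_ext m _ _ (Yw_scons s)). apply (fmap_cons m Hm).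
  apply (proj1 (dstep_ok s H)). apply Yw_iword. apply (proj2 (dstep_ok s H)).
Qed.

Lemma fB x t : iword m x -> 0 <= t <= 1 -> f (Yw (MB, x, t)) = RtoC t.
Proof.
  intros Hx Ht. symmetry.
  assert (Z : (RtoC t - f (Yw (MB, x, t)))%C = RtoC 0); [|
    replace (RtoC t) with ((RtoC t - f (Yw (MB, x, t))) + f (Yw (MB, x, t)))%C by ring; rewrite Z; ring].
  apply (Cmod_small _ 2). intros n. revert t Ht. induction n as [|n IH]; intros t Ht.
  - simpl. eapply Rle_trans. apply Cmod_triangle. rewrite Cmod_opp.
    pose proof (inD_Cmod m Hm _ (fmap_inD m Hm _ (Yw_iword (MB, x, t) Hx))).
    rewrite Cmod_R, Rabs_right by lra. lra.
  - rewrite fY by auto. simpl dstep. destruct (Rle_dec t (1/2)) as [Hl|Hl]; simpl fst; simpl snd.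
    + replace (RtoC t) with (psi m 1 (RtoC (2 * t))) by (rewrite (psi_1 m Hm); apply injective_projections; simpl; field).
      rewrite (psi_dist m Hm), (aw_12 m Hm) by lia. specialize (IH (2*t) ltac:(lra)). simpl. lra.
    + replace (RtoC t) with (psi m 2 (RtoC (2 * t - 1))) by (rewrite (psi_2 m Hm); apply injective_projections; simpl; field).
      rewrite (psi_dist m Hm), (aw_12 m Hm) by lia. specialize (IH (2*t - 1) ltac:(lra)). simpl. lra.
Qed.

Definition gQ x t := f (Yw (MQ, x, t)).
Definition gP x t := f (Yw (MP, x, t)).

Lemma gQ_eq x t : iword m x -> gQ x t =
  if Nat.eqb (x O) 1 then psi m 1 (gQ (shift x) t)
  else if Rle_dec t (1/2) then psi m 1 (f (Yw (MB, x, 2*t))) else psi m (x O) (gQ (shift x) (2*t-1)).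
Proof.
  intros Hx. unfold gQ. rewrite fY by auto. simpl dstep.
  destruct (Nat.eqb (x O) 1); simpl; auto. destruct (Rle_dec t (1/2)); simpl; auto.
Qed.

Lemma gP_eq x t : iword m x -> gP x t =
  if Nat.eqb (x O) 2 then psi m 2 (gP (shift x) t)
  else if Rle_dec t (1/2) then psi m 2 (f (Yw (MB, x, 1 - 2*t)))
  else if Nat.eqb (x O) 1 then psi m 1 (gP (shift x) (2*t-1)) else psi m (x O) (gQ (shift x) (2*t-1)).
Proof.
  intros Hx. unfold gP, gQ. rewrite fY by auto. simpl dstep.
  destruct (Nat.eqb (x O) 2); simpl; auto. destruct (Rle_dec t (1/2)); simpl; auto.
  destruct (Nat.eqb (x O) 1); simpl; auto.
Qed.

Lemma gQ_in x t : iword m x -> Cmod (gQ x t) <= 1.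
Proof. intros. apply (inD_Cmod m Hm). apply fmap_inD; auto. apply Yw_iword. auto. Qed.
Lemma gP_in x t : iword m x -> Cmod (gP x t) <= 1.
Proof. intros. apply (inD_Cmod m Hm). apply fmap_inD; auto. apply Yw_iword. auto. Qed.

Lemma Cmod_pair a : Cmod (a, 0) = Rabs a.
Proof. apply Cmod_R. Qed.

Lemma f_split x : iword m x -> f x = psi m (x O) (f (shift x)).
Proof.
  intros Hx. rewrite (fmap_ext m x (scons (x O) (shift x))). apply (fmap_cons m Hm); auto.
  apply iword_shift; auto. intros [|k]; reflexivity.
Qed.

Lemma psi1_0 : psi m 1 0 = RtoC 0.
Proof. rewrite (psi_1 m Hm). apply injective_projections; simpl; field. Qed.


Lemma eq_of_small (a b : C) K : (forall n, Cmod (a - b) <= K * (1/2)^n) -> a = b.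
Proof.
  intros H. apply Cmod_small in H. replace a with ((a - b) + b)%C by ring. rewrite H. ring.
Qed.

Lemma gQ_0 x : iword m x -> gQ x 0 = RtoC 0.
Proof.
  intros Hx. apply eq_of_small with 1. intros n. revert x Hx. induction n as [|n IH]; intros x Hx.
  - simpl. replace (gQ x 0 - 0)%C with (gQ x 0) by ring. pose proof (gQ_in x 0 Hx). lra.
  - rewrite gQ_eq by auto. destruct (Nat.eqb (x O) 1).
    + rewrite <- psi1_0. rewrite (psi_dist m Hm), (aw_12 m Hm) by lia.
      specialize (IH (shift x) (iword_shift _ _ Hx)). simpl. lra.
    + destruct (Rle_dec 0 (1/2)); [|lra]. rewrite Rmult_0_r, fB by (auto; lra).
      rewrite psi1_0. replace (RtoC 0 - RtoC 0)%C with (RtoC 0) by ring. rewrite Cmod_0.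
      pose proof (pow_le (1/2) (S n) ltac:(lra)). lra.
Qed.

Lemma one_pt : psi m 2 (RtoC 1) = (RtoC 1).
Proof. rewrite (psi_2 m Hm). apply injective_projections; simpl; field. Qed.

Lemma gP_0 x : iword m x -> gP x 0 = (RtoC 1).
Proof.
  intros Hx. apply eq_of_small with 2. intros n. revert x Hx. induction n as [|n IH]; intros x Hx.
  - simpl. eapply Rle_trans. apply Cmod_triangle. rewrite Cmod_opp. pose proof (gP_in x 0 Hx).
    replace (RtoC 1) with (RtoC 1) by reflexivity. rewrite Cmod_R, Rabs_R1. lra.
  - rewrite gP_eq by auto. destruct (Nat.eqb (x O) 2).
    + rewrite <- one_pt. rewrite (psi_dist m Hm), (aw_12 m Hm) by lia.
      specialize (IH (shift x) (iword_shift _ _ Hx)). simpl. lra.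
    + destruct (Rle_dec 0 (1/2)); [|lra]. replace (1 - 2 * 0) with 1 by ring. rewrite fB by (auto; lra).
      rewrite one_pt. replace ((RtoC 1) - (RtoC 1))%C with (RtoC 0) by ring. rewrite Cmod_0.
      pose proof (pow_le (1/2) (S n) ltac:(lra)). lra.
Qed.

Lemma gQ_1 x : iword m x -> gQ x 1 = f x.
Proof.
  intros Hx. apply eq_of_small with 2. intros n. revert x Hx. induction n as [|n IH]; intros x Hx.
  - simpl. eapply Rle_trans. apply Cmod_triangle. rewrite Cmod_opp. pose proof (gQ_in x 1 Hx).
    pose proof (inD_Cmod m Hm _ (fmap_inD m Hm x Hx)). lra.
  - rewrite gQ_eq by auto. rewrite (f_split x Hx). specialize (IH (shift x) (iword_shift _ _ Hx)).
    destruct (Nat.eqb_spec (x O) 1) as [E|E].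
    + rewrite E, (psi_dist m Hm), (aw_12 m Hm) by lia. simpl. lra.
    + destruct (Rle_dec 1 (1/2)); [lra|]. replace (2 * 1 - 1) with 1 by ring.
      rewrite (psi_dist m Hm). pose proof (aw_le_half m Hm (x O)). pose proof (aw_pos m Hm (x O)).
      simpl. pose proof (Cmod_ge_0 (gQ (shift x) 1 - f (shift x))%C). nra.
Qed.

Lemma gP_1 x : iword m x -> gP x 1 = f x.
Proof.
  intros Hx. apply eq_of_small with 2. intros n. revert x Hx. induction n as [|n IH]; intros x Hx.
  - simpl. eapply Rle_trans. apply Cmod_triangle. rewrite Cmod_opp. pose proof (gP_in x 1 Hx).
    pose proof (inD_Cmod m Hm _ (fmap_inD m Hm x Hx)). lra.
  - rewrite gP_eq by auto. rewrite (f_split x Hx). specialize (IH (shift x) (iword_shift _ _ Hx)).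
    destruct (Nat.eqb_spec (x O) 2) as [E|E].
    + rewrite E, (psi_dist m Hm), (aw_12 m Hm) by lia. simpl. lra.
    + destruct (Rle_dec 1 (1/2)); [lra|]. replace (2 * 1 - 1) with 1 by ring.
      destruct (Nat.eqb_spec (x O) 1) as [E1|E1].
      * rewrite E1, (psi_dist m Hm), (aw_12 m Hm) by lia. simpl. lra.
      * rewrite gQ_1 by (apply iword_shift; auto). replace (psi m (x O) (f (shift x)) - psi m (x O) (f (shift x)))%C
          with (RtoC 0) by ring. rewrite Cmod_0. pose proof (pow_le (1/2) (S n) ltac:(lra)). lra.
Qed.

Lemma cpt_Q j : (2 <= j)%nat -> psi m j (RtoC 0) = cpt.
Proof. intros. unfold psi, bvec. destruct (Nat.eqb_spec j 1). lia. ring. Qed.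

Lemma cpt_P : psi m 1 (RtoC 1) = cpt.
Proof. rewrite (psi_1 m Hm). unfold cpt. apply injective_projections; simpl; field. Qed.

Lemma half_lip j a b K : Cmod (a - b) <= K -> Cmod (psi m j a - psi m j b) <= K / 2.
Proof.
  intros H. rewrite (psi_dist m Hm). pose proof (aw_le_half m Hm j). pose proof (aw_pos m Hm j).
  pose proof (Cmod_ge_0 (a - b)%C). nra.
Qed.

Lemma Cmod_RR a b : Cmod (RtoC a - RtoC b) = Rabs (a - b).
Proof. replace (RtoC a - RtoC b)%C with (RtoC (a - b)) by (apply injective_projections; simpl; ring). apply Cmod_R. Qed.

Lemma lipQP : forall n, forall x, iword m x -> forall t s, 0 <= t -> t <= s -> s <= 1 ->
  Cmod (gQ x t - gQ x s) <= (s - t) + 4 * (1/2)^n /\ Cmod (gP x t - gP x s) <= (s - t) + 4 * (1/2)^n.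
Proof.
  induction n as [|n IH]; intros x Hx t s H0 Hts H1.
  - simpl. split; eapply Rle_trans; try apply Cmod_triangle; rewrite Cmod_opp.
    + pose proof (gQ_in x t Hx). pose proof (gQ_in x s Hx). lra.
    + pose proof (gP_in x t Hx). pose proof (gP_in x s Hx). lra.
  - assert (Hx' := iword_shift _ _ Hx). set (x' := shift x) in *.
    pose proof (pow_le (1/2) n ltac:(lra)) as Pn.
    assert (Hh : 4 * (1/2)^(S n) = 2 * (1/2)^n) by (simpl; field). rewrite Hh.
    assert (Hxl : letter m (x O)) by apply Hx.
    assert (Q0 : gQ x' 0 = RtoC 0) by (apply gQ_0; auto).
    assert (P0 : gP x' 0 = RtoC 1) by (apply gP_0; auto).
    split.
    + rewrite (gQ_eq x t Hx), (gQ_eq x s Hx). fold x'. destruct (Nat.eqb_spec (x O) 1) as [E|E].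
      * destruct (IH x' Hx' t s) as [A _]; auto. apply (half_lip 1) in A. lra.
      * assert (Hj : (2 <= x O)%nat) by (unfold letter in Hxl; lia).
        destruct (Rle_dec t (1/2)) as [Ht|Ht]; destruct (Rle_dec s (1/2)) as [Hs|Hs].
        -- rewrite !fB by (auto; lra). rewrite (psi_dist m Hm), (aw_12 m Hm) by lia. rewrite Cmod_RR.
           rewrite Rabs_left1 by lra. lra.
        -- rewrite fB by (auto; lra).
           assert (Eq : psi m 1 (RtoC 1) = psi m (x O) (gQ x' 0)) by (rewrite cpt_P, Q0, cpt_Q; auto).
           pose proof (Cmod_tri3 (psi m 1 (RtoC (2 * t))) (psi m 1 (RtoC 1)) (psi m (x O) (gQ x' (2 * s - 1)))) as T.
           assert (T1 : Cmod (psi m 1 (RtoC (2 * t)) - psi m 1 (RtoC 1)) = 1/2 - t).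
           { rewrite (psi_dist m Hm), (aw_12 m Hm) by lia. rewrite Cmod_RR, Rabs_left1 by lra. lra. }
           destruct (IH x' Hx' 0 (2 * s - 1)) as [A _]; try lra. apply (half_lip (x O)) in A.
           rewrite <- Eq in A. lra.
        -- lra.
        -- destruct (IH x' Hx' (2 * t - 1) (2 * s - 1)) as [A _]; try lra. apply (half_lip (x O)) in A. lra.
    + rewrite (gP_eq x t Hx), (gP_eq x s Hx). fold x'. destruct (Nat.eqb_spec (x O) 2) as [E|E].
      * destruct (IH x' Hx' t s) as [_ A]; auto. apply (half_lip 2) in A. lra.
      * destruct (Rle_dec t (1/2)) as [Ht|Ht]; destruct (Rle_dec s (1/2)) as [Hs|Hs].
        -- rewrite !fB by (auto; lra). rewrite (psi_dist m Hm), (aw_12 m Hm) by lia. rewrite Cmod_RR.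
           rewrite Rabs_right by lra. lra.
        -- rewrite fB by (auto; lra).
           assert (C2 : psi m 2 (RtoC 0) = cpt) by (apply cpt_Q; lia).
           assert (F1 : Cmod (psi m 2 (RtoC (1 - 2 * t)) - psi m 2 (RtoC 0)) = 1/2 - t).
           { rewrite (psi_dist m Hm), (aw_12 m Hm) by lia. rewrite Cmod_RR, Rabs_right by lra. lra. }
           destruct (Nat.eqb_spec (x O) 1) as [E1|E1].
           ++ assert (Eq : psi m 2 (RtoC 0) = psi m 1 (gP x' 0)) by (rewrite C2, P0, cpt_P; auto).
              pose proof (Cmod_tri3 (psi m 2 (RtoC (1 - 2 * t))) (psi m 2 (RtoC 0)) (psi m 1 (gP x' (2 * s - 1)))) as T.
              destruct (IH x' Hx' 0 (2 * s - 1)) as [_ A]; try lra. apply (half_lip 1) in A.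
              rewrite <- Eq in A. lra.
           ++ assert (Hj : (3 <= x O)%nat) by (unfold letter in Hxl; lia).
              assert (Eq : psi m 2 (RtoC 0) = psi m (x O) (gQ x' 0)) by (rewrite C2, Q0, cpt_Q; auto; lia).
              pose proof (Cmod_tri3 (psi m 2 (RtoC (1 - 2 * t))) (psi m 2 (RtoC 0)) (psi m (x O) (gQ x' (2 * s - 1)))) as T.
              destruct (IH x' Hx' 0 (2 * s - 1)) as [A _]; try lra. apply (half_lip (x O)) in A.
              rewrite <- Eq in A. lra.
        -- lra.
        -- destruct (Nat.eqb_spec (x O) 1) as [E1|E1].
           ++ destruct (IH x' Hx' (2 * t - 1) (2 * s - 1)) as [_ A]; try lra. apply (half_lip 1) in A. lra.
           ++ destruct (IH x' Hx' (2 * t - 1) (2 * s - 1)) as [A _]; try lra. apply (half_lip (x O)) in A. lra.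
Qed.

Lemma lipQ x t s : iword m x -> 0 <= t <= 1 -> 0 <= s <= 1 -> Cmod (gQ x t - gQ x s) <= Rabs (t - s).
Proof.
  intros Hx Ht Hs. destruct (Rle_dec t s) as [Hle|Hle].
  - rewrite Rabs_left1 by lra. apply le_of_half_pow with 4. intros n.
    destruct (lipQP n x Hx t s) as [A _]; lra.
  - rewrite Rabs_right by lra. rewrite Cmod_sym. apply le_of_half_pow with 4. intros n.
    destruct (lipQP n x Hx s t) as [A _]; lra.
Qed.

Lemma lipP x t s : iword m x -> 0 <= t <= 1 -> 0 <= s <= 1 -> Cmod (gP x t - gP x s) <= Rabs (t - s).
Proof.
  intros Hx Ht Hs. destruct (Rle_dec t s) as [Hle|Hle].
  - rewrite Rabs_left1 by lra. apply le_of_half_pow with 4. intros n.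
    destruct (lipQP n x Hx t s) as [_ A]; lra.
  - rewrite Rabs_right by lra. rewrite Cmod_sym. apply le_of_half_pow with 4. intros n.
    destruct (lipQP n x Hx s t) as [_ A]; lra.
Qed.

End Paths.

Lemma dist2_Cmod p q : dist2 p q = Cmod (p - q)%C.
Proof. destruct p as [a b], q as [c d]. unfold dist2, Cmod. simpl. f_equal. Qed.

Lemma lip_path (g : R -> R * R) L : 0 <= L ->
  (forall t s, 0 <= t <= 1 -> 0 <= s <= 1 -> dist2 (g t) (g s) <= L * Rabs (t - s)) ->
  path_continuous g /\ path_length_le g L.
Proof.
  intros HL H. split.
  - intros t Ht eps Heps. exists (eps / (L + 1)). split. apply Rdiv_lt_0_compat; lra.
    intros s Hs Hst. eapply Rle_lt_trans. apply H; auto.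
    apply Rle_lt_trans with ((L + 1) * Rabs (s - t)).
    + pose proof (Rabs_pos (s - t)). nra.
    + apply Rmult_lt_reg_r with (/ (L + 1)). apply Rinv_0_lt_compat; lra.
      replace ((L + 1) * Rabs (s - t) * / (L + 1)) with (Rabs (s - t)) by (field; lra). exact Hst.
  - intros n t H0 Hn Hmono.
    assert (Mono : forall i j, (i <= j <= n)%nat -> t i <= t j).
    { intros i j Hij. destruct Hij as [Hij Hjn]. induction Hij. lra.
      apply Rle_trans with (t m). apply IHHij. lia. apply Hmono. lia. }
    assert (Rng : forall i, (i <= n)%nat -> 0 <= t i <= 1).
    { intros i Hi. rewrite <- H0, <- Hn. split; apply Mono; lia. }
    assert (forall k, (k <= n)%nat -> poly_sum g t k <= L * (t k - t O)).
    { induction k as [|k IH]; intros Hk. simpl. lra.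
      simpl. pose proof (IH ltac:(lia)). pose proof (Hmono k ltac:(lia)).
      pose proof (H (t (S k)) (t k) (Rng (S k) Hk) (Rng k ltac:(lia))).
      rewrite Rabs_right in H3 by lra. lra. }
    specialize (H1 n (le_n n)). rewrite Hn, H0 in H1. lra.
Qed.

Section Final.
Variable m : nat.
Hypothesis Hm : (2 <= m)%nat.
Notation f := (fmap m).

Definition modei (i : nat) := if Nat.eqb i 1 then MP else MQ.
Definition gi i x t := f (Yw (modei i, x, t)).

Lemma gi_0 i x : iword m x -> gi i x 0 = fixp (ebase i).
Proof.
  intros Hx. unfold gi, modei, ebase. destruct (Nat.eqb i 1).
  - apply (gP_0 m Hm); auto.
  - apply (gQ_0 m Hm); auto.
Qed.

Lemma gi_1 i x : iword m x -> gi i x 1 = f x.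
Proof.
  intros Hx. unfold gi, modei. destruct (Nat.eqb i 1).
  - apply (gP_1 m Hm); auto.
  - apply (gQ_1 m Hm); auto.
Qed.

Lemma gi_lip i x t s : iword m x -> 0 <= t <= 1 -> 0 <= s <= 1 -> Cmod (gi i x t - gi i x s) <= Rabs (t - s).
Proof.
  intros Hx Ht Hs. unfold gi, modei. destruct (Nat.eqb i 1).
  - apply (lipP m Hm); auto.
  - apply (lipQ m Hm); auto.
Qed.

Lemma arc_props x v i k : iword m x -> fword m v -> letter m i ->
  ibegins x (v ++ i :: repeat (ebase i) k) ->
  let V := (v ++ i :: repeat (ebase i) k) in
  let x1 := shiftn (length V) x in
  let A := fun t => Psi m V (gi i x1 t) in
  A 0 = Psi m v cpt /\ A 1 = f x /\
  (forall t s, 0 <= t <= 1 -> 0 <= s <= 1 -> Cmod (A t - A s) <= Dl m V * Rabs (t - s)) /\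
  (forall t, exists w, iword m w /\ f w = A t).
Proof.
  intros Hx Hv Hi Bx V x1 A.
  assert (Hx1 : iword m x1) by (apply iword_shiftn; auto).
  assert (FV : fword m V) by (apply (fword_of_begins m x); auto).
  split; [|split; [|split]].
  - unfold A. rewrite gi_0 by auto. unfold V. rewrite Psi_app. simpl.
    rewrite (Psi_repeat_fix m Hm) by apply ebase_12. rewrite (psi_center m Hm) by auto. reflexivity.
  - unfold A. rewrite gi_1 by auto. symmetry. apply (fmap_begins m Hm); auto.
  - intros t s Ht Hs. unfold A. rewrite (Psi_dist m Hm). pose proof (Dl_nonneg m Hm V).
    pose proof (gi_lip i x1 t s Hx1 Ht Hs). nra.
  - intros t. exists (prepend V (Yw (modei i, x1, t))). split.
    + apply iword_prepend; auto. apply (Yw_iword m Hm). unfold swd. simpl. auto.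
    + rewrite (fmap_prepend m Hm); auto. apply (Yw_iword m Hm). unfold swd. simpl. auto.
Qed.

Definition Cq := 2 * (Ck m + 1).

Lemma qc_main x y : iword m x -> iword m y -> exists g : R -> R * R,
  path_continuous g /\ (forall t, 0 <= t <= 1 -> image m f (g t)) /\
  g 0 = f x /\ g 1 = f y /\ path_length_le g (Cq * dist2 (f x) (f y)).
Proof.
  intros Hx Hy. rewrite dist2_Cmod.
  pose proof (Ck_pos m Hm) as Ckp.
  destruct (classic (f x = f y)) as [Exy|Nxy].
  - exists (fun _ => f x). rewrite <- Exy. replace (f x - f x)%C with (RtoC 0) by ring. rewrite Cmod_0, Rmult_0_r.
    destruct (lip_path (fun _ => f x) 0) as [C1 C2]. lra.
    { intros. rewrite dist2_Cmod. replace (f x - f x)%C with (RtoC 0) by ring. rewrite Cmod_0. lra. }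
    split; [auto|split; [|split; [auto|split; [auto|auto]]]].
    intros t _. exists x. auto.
  - assert (Hd : exists n, x n <> y n).
    { apply NNPP. intros Hn. apply Nxy. apply fmap_ext. intros k.
      destruct (Nat.eq_dec (x k) (y k)); auto. exfalso; apply Hn; eauto. }
    assert (Hpos : 0 < Cmod (f x - f y)%C).
    { apply Cmod_gt_0. intros E. apply Nxy. replace (f x) with ((f x - f y) + f y)%C by ring. rewrite E. ring. }
    destruct (key_lemma m Hm x y Hx Hy Hd (Cmod (f x - f y)%C) Hpos)
      as [v [i [j [k [l [Fv [Hi [Hj [Hij [Bx [By Hsum]]]]]]]]]]].
    destruct (arc_props x v i k Hx Fv Hi Bx) as [A0 [A1 [AL AI]]].
    destruct (arc_props y v j l Hy Fv Hj By) as [B0 [B1 [BL BI]]].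
    set (V1 := v ++ i :: repeat (ebase i) k) in *. set (V2 := v ++ j :: repeat (ebase j) l) in *.
    set (A := fun t => Psi m V1 (gi i (shiftn (length V1) x) t)) in *.
    set (B := fun t => Psi m V2 (gi j (shiftn (length V2) y) t)) in *.
    simpl in A0, A1, AL, AI, B0, B1, BL, BI.
    set (g := fun t => if Rle_dec t (1/2) then A (1 - 2 * t) else B (2 * t - 1)).
    set (L := 2 * (Dl m V1 + Dl m V2)).
    pose proof (Dl_nonneg m Hm V1). pose proof (Dl_nonneg m Hm V2).
    assert (Lip1 : forall t s, 0 <= t <= 1 -> 0 <= s <= 1 -> t <= s -> Cmod (g t - g s) <= L * (s - t)).
    { intros t s Ht Hs Hts. unfold g.
      destruct (Rle_dec t (1/2)); destruct (Rle_dec s (1/2)).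
      - eapply Rle_trans. apply AL; lra. rewrite Rabs_right by lra. unfold L. nra.
      - assert (E0 : A 0 = B 0) by (transitivity (Psi m v cpt); [exact A0|symmetry; exact B0]).
        pose proof (Cmod_tri3 (A (1 - 2 * t)) (A 0) (B (2 * s - 1))) as T.
        assert (T1 : Cmod (A (1 - 2 * t) - A 0) <= Dl m V1 * Rabs (1 - 2 * t - 0))
          by exact (AL (1 - 2 * t) 0 ltac:(lra) ltac:(lra)).
        assert (T2 : Cmod (B 0 - B (2 * s - 1)) <= Dl m V2 * Rabs (0 - (2 * s - 1)))
          by exact (BL 0 (2 * s - 1) ltac:(lra) ltac:(lra)).
        rewrite Rabs_right in T1 by lra. rewrite Rabs_left1 in T2 by lra.
        rewrite E0 in T, T1. unfold L.
        assert (Dl m V1 * (1 - 2 * t) <= Dl m V1 * (2 * (s - t))) by (apply Rmult_le_compat_l; lra).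
        assert (Dl m V2 * (2 * s - 1) <= Dl m V2 * (2 * (s - t))) by (apply Rmult_le_compat_l; lra).
        lra.
      - lra.
      - eapply Rle_trans. apply BL; lra. rewrite Rabs_left1 by lra. unfold L. nra. }
    assert (Lip : forall t s, 0 <= t <= 1 -> 0 <= s <= 1 -> dist2 (g t) (g s) <= L * Rabs (t - s)).
    { intros t s Ht Hs. rewrite dist2_Cmod. destruct (Rle_dec t s).
      - rewrite Rabs_left1 by lra. replace (- (t - s)) with (s - t) by ring. apply Lip1; auto.
      - rewrite Rabs_right by lra. rewrite Cmod_sym. apply Lip1; auto; lra. }
    destruct (lip_path g L) as [Gc Gl]. unfold L; lra. exact Lip.
    exists g. split; [auto|split; [|split; [|split]]].
    + intros t Ht. unfold g. destruct (Rle_dec t (1/2)).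
      * destruct (AI (1 - 2 * t)) as [w [Hw Ew]]. exists w. auto.
      * destruct (BI (2 * t - 1)) as [w [Hw Ew]]. exists w. auto.
    + unfold g. destruct (Rle_dec 0 (1/2)); [|lra]. replace (1 - 2 * 0) with 1 by ring. auto.
    + unfold g. destruct (Rle_dec 1 (1/2)); [lra|]. replace (2 * 1 - 1) with 1 by ring. auto.
    + intros n t T0 Tn Tm. eapply Rle_trans. apply Gl; auto.
      unfold L, Cq. fold V1 V2 in Hsum. nra.
Qed.

End Final.

Theorem proposition10p1 :
  forall m : nat, (2 <= m)%nat ->
    exists a : nat -> R, weight a /\
      exists f : (nat -> nat) -> R * R,
        bilip_embedding m a f /\ quasiconvex (image m f).
Proof.
  intros m Hm. exists (aw m). split. apply (aw_weight m Hm).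
  exists (fmap m). split.
  - exists (Ck m + 2). pose proof (Ck_pos m Hm). split. lra.
    intros w u Hw Hu. rewrite dist2_Cmod.
    pose proof (rho_le_dist m Hm w u Hw Hu). pose proof (dist_le_rho m Hm w u Hw Hu).
    pose proof (rho_nonneg m Hm w u). pose proof (Cmod_ge_0 (fmap m w - fmap m u)%C).
    split.
    + apply Rmult_le_reg_r with (Ck m + 2). lra. unfold Rdiv. rewrite Rmult_assoc, Rinv_l by lra. nra.
    + nra.
  - exists (Cq m). intros p q [x [Hx <-]] [y [Hy <-]]. apply qc_main; auto.
Qed.
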